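(* Let $\theta\in\mathbb{C}^4$ and let $\sigma=\sigma_{i_1}\sigma_{i_2}\cdots\sigma_{i_n}$ with $n\ge1$, $(i_1,\dots,i_n)\in\{1,2,3\}^n$ and $i_\nu\ne i_{\nu+1}$ for all $\nu$. Then $\mathcal{E}(\sigma)=\bigcup_{\nu=1}^nL_{i_\nu}$, $\sigma(\mathcal{E}(\sigma))=\{p_{i_1}\}$, and $I(\sigma)=\{p_{i_n}\}$.
   Context: For $\theta\in\mathbb{C}^4$, $\overline{\mathcal{S}}(\theta)\subset\mathbb{P}^3$ is the cubic surface $X_1X_2X_3+X_0(X_1^2+X_2^2+X_3^2)-X_0^2(\theta_1X_1+\theta_2X_2+\theta_3X_3)+\theta_4X_0^3=0$; $L_i=\{X_0=X_i=0\}$ ($i=1,2,3$); $p_1=[0:1:0:0]$, $p_2=[0:0:1:0]$, $p_3=[0:0:0:1]$. For $\{i,j,k\}=\{1,2,3\}$, $\sigma_i$ is the birational involution of $\overline{\mathcal{S}}(\theta)$ given by $X'_0=X_0^2$, $X'_i=\theta_iX_0^2-X_0X_i-X_jX_k$, $X'_j=X_0X_j$, $X'_k=X_0X_k$. For a bimeromorphic map $f$ of a compact complex surface $S$, represented by its desingularized graph $\Gamma$ with proper modifications $\pi_1,\pi_2:\Gamma\to S$, $f=\pi_2\circ\pi_1^{-1}$, let $\mathcal{E}(\pi_i)=\{x\in\Gamma:\#\pi_i^{-1}(\pi_i(x))=\infty\}$; the exceptional set is $\mathcal{E}(f)=\pi_1(\mathcal{E}(\pi_2))$ and the indeterminacy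 set is $I(f)=\pi_1(\mathcal{E}(\pi_1))$. *)

(* Defs.v *)
From Stdlib Require Import Reals List.
From Coquelicot Require Import Coquelicot.
Import ListNotations.
Open Scope R_scope.

(* Homogeneous coordinates [X0:X1:X2:X3] of a point of P^3(C);
   a point is represented by any nzv vector. *)
Record V4 := mkV4 { X0 : C; X1 : C; X2 : C; X3 : C }.

Definition v4zero : V4 := mkV4 0%C 0%C 0%C 0%C.
Definition nzv (X : V4) : Prop := X <> v4zero.

Definition scale (l : C) (X : V4) : V4 :=
  mkV4 (l * X0 X)%C (l * X1 X)%C (l * X2 X)%C (l * X3 X)%C.

Definition proj_eq (X Y : V4) : Prop :=
  nzv X /\ nzv Y /\ exists l : C, l <> 0%C /\ Y = scale l X.

Inductive idx := I1 | I2 | I3.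

Definition coord (i : idx) (X : V4) : C :=
  match i with I1 => X1 X | I2 => X2 X | I3 => X3 X end.

Definition on_S (t1 t2 t3 t4 : C) (X : V4) : Prop :=
  nzv X /\
  (X1 X * X2 X * X3 X
   + X0 X * (X1 X * X1 X + X2 X * X2 X + X3 X * X3 X)
   - X0 X * X0 X * (t1 * X1 X + t2 * X2 X + t3 * X3 X)
   + t4 * (X0 X * X0 X * X0 X))%C = 0%C.

Definition on_L (i : idx) (X : V4) : Prop :=
  nzv X /\ X0 X = 0%C /\ coord i X = 0%C.

Definition pt (i : idx) : V4 :=
  match i with
  | I1 => mkV4 0%C 1%C 0%C 0%C
  | I2 => mkV4 0%C 0%C 1%C 0%C
  | I3 => mkV4 0%C 0%C 0%C 1%C
  end.

Definition sigma_formula (t1 t2 t3 : C) (i : idx) (X : V4) : V4 :=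
  let a := X0 X in let x := X1 X in let y := X2 X in let z := X3 X in
  match i with
  | I1 => mkV4 (a * a)%C (t1 * a * a - a * x - y * z)%C (a * y)%C (a * z)%C
  | I2 => mkV4 (a * a)%C (a * x)%C (t2 * a * a - a * y - x * z)%C (a * z)%C
  | I3 => mkV4 (a * a)%C (a * x)%C (a * y)%C (t3 * a * a - a * z - x * y)%C
  end.

(* Evaluation of the formula of sigma = sigma_{i_1} ... sigma_{i_n}
   (word [i_1; ...; i_n], sigma_{i_n} applied first) at a vector. *)
Fixpoint eval_word (t1 t2 t3 : C) (w : list idx) (X : V4) : V4 :=
  match w with
  | [] => X
  | i :: w' => sigma_formula t1 t2 t3 i (eval_word t1 t2 t3 w' X)
  end.

Fixpoint defined_at (t1 t2 t3 : C) (w : list idx) (X : V4) : Prop :=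
  match w with
  | [] => nzv X
  | _ :: w' => defined_at t1 t2 t3 w' X /\ nzv (eval_word t1 t2 t3 w X)
  end.

Definition close (X Y : V4) (e : R) : Prop :=
  Cmod (X0 X - X0 Y)%C < e /\ Cmod (X1 X - X1 Y)%C < e /\
  Cmod (X2 X - X2 Y)%C < e /\ Cmod (X3 X - X3 Y)%C < e.

Definition graph0 (t1 t2 t3 t4 : C) (w : list idx) (X Y : V4) : Prop :=
  on_S t1 t2 t3 t4 X /\ defined_at t1 t2 t3 w X /\ Y = eval_word t1 t2 t3 w X.

(* The graph Gamma of sigma: closure in P^3 x P^3 (Euclidean topology)
   of graph0.  (X, Y) in Gamma, for nzv representatives X, Y. *)
Definition graph (t1 t2 t3 t4 : C) (w : list idx) (X Y : V4) : Prop :=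
  nzv X /\ nzv Y /\
  forall e : R, 0 < e ->
    exists X' Y' : V4, graph0 t1 t2 t3 t4 w X' Y' /\
      exists l m : C, close X (scale l X') e /\ close Y (scale m Y') e.

Definition proj_infinite (P : V4 -> Prop) : Prop :=
  forall l : list V4, exists Y, P Y /\ forall Z, In Z l -> ~ proj_eq Z Y.

(* Indeterminacy set I(sigma) = pi_1(E(pi_1)). *)
Definition indet (t1 t2 t3 t4 : C) (w : list idx) (X : V4) : Prop :=
  (exists Y, graph t1 t2 t3 t4 w X Y) /\
  proj_infinite (fun Y => graph t1 t2 t3 t4 w X Y).

(* Exceptional set E(sigma) = pi_1(E(pi_2)). *)
Definition exc (t1 t2 t3 t4 : C) (w : list idx) (X : V4) : Prop :=
  exists Y, graph t1 t2 t3 t4 w X Y /\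
    proj_infinite (fun X' => graph t1 t2 t3 t4 w X' Y).

Definition sigma_image (t1 t2 t3 t4 : C) (w : list idx) (A : V4 -> Prop) (Y : V4) : Prop :=
  exists X, A X /\ ~ indet t1 t2 t3 t4 w X /\ graph t1 t2 t3 t4 w X Y.

Fixpoint no_repeat (w : list idx) : Prop :=
  match w with
  | i :: ((j :: _) as w') => i <> j /\ no_repeat w'
  | _ => True
  end.

(* Main.v *)
Require Import Defs.
From Stdlib Require Import Reals List Lra Classical.
From Coquelicot Require Import Coquelicot.
Require Import Defs.
Import ListNotations.
Open Scope R_scope.


Inductive c4 := K0 | K1 | K2 | K3.
Definition cd (c : c4) (X : V4) : C :=
  match c with K0 => X0 X | K1 => X1 X | K2 => X2 X | K3 => X3 X end.

Lemma V4_ext (X Y : V4) : (forall c, cd c X = cd c Y) -> X = Y.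
Proof.
  destruct X, Y; intros H.
  pose proof (H K0); pose proof (H K1); pose proof (H K2); pose proof (H K3).
  simpl in *; subst; reflexivity.
Qed.

Lemma close_iff X Y e : close X Y e <-> forall c, Cmod (cd c X - cd c Y) < e.
Proof.
  unfold close; split.
  - intros (?&?&?&?) c; destruct c; simpl; auto.
  - intros H; repeat split; [apply (H K0)|apply (H K1)|apply (H K2)|apply (H K3)].
Qed.

Lemma nzv_iff X : nzv X <-> exists c, cd c X <> 0%C.
Proof.
  unfold nzv; split.
  - intros H. apply NNPP; intros H'. apply H. apply V4_ext. intros c.
    destruct (classic (cd c X = 0%C)) as [E|E].
    + rewrite E; destruct c; reflexivity.
    + exfalso; apply H'; eauto.
  - intros [c Hc] E; subst; destruct c; simpl in Hc; auto.
Qed.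

Lemma cd_scale c l X : cd c (scale l X) = (l * cd c X)%C.
Proof. destruct c; reflexivity. Qed.

Lemma Cmod_sub_sym (a b : C) : Cmod (a - b) = Cmod (b - a).
Proof. replace (b - a)%C with (- (a - b))%C by ring. now rewrite Cmod_opp. Qed.

Lemma Cmod_tri3 (a b c : C) : Cmod (a - c) <= Cmod (a - b) + Cmod (b - c).
Proof. replace (a - c)%C with ((a - b) + (b - c))%C by ring. apply Cmod_triangle. Qed.

Lemma Cmod_sub_le (a b : C) : Cmod a <= Cmod b + Cmod (a - b).
Proof. replace a with (b + (a - b))%C at 1 by ring. apply Cmod_triangle. Qed.

Lemma Cmult_eq0 (a b : C) : (a * b = 0)%C -> a = 0%C \/ b = 0%C.
Proof.
  intros H. destruct (classic (a = 0%C)) as [E|E]; [now left|right].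
  replace b with (/ a * (a * b))%C by (field; auto). rewrite H; ring.
Qed.

Lemma Cmult_neq0 (a b : C) : a <> 0%C -> b <> 0%C -> (a * b <> 0)%C.
Proof. intros Ha Hb H; destruct (Cmult_eq0 _ _ H) as [E|E]. all: auto. Qed.

Lemma RtoC_neq0 r : r <> 0 -> RtoC r <> 0%C.
Proof. intros H E. apply H. injection E; auto. Qed.

Definition cont (f : V4 -> C) (W : V4) : Prop :=
  forall e, 0 < e -> exists d, 0 < d /\ forall X, close W X d -> Cmod (f W - f X) < e.

Lemma cont_const (k : C) W : cont (fun _ => k) W.
Proof. intros e He; exists 1; split; [lra|]. intros X _. replace (k - k)%C with (RtoC 0) by ring. rewrite Cmod_0; lra. Qed.

Lemma cont_cd c W : cont (cd c) W.
Proof. intros e He; exists e; split; auto. intros X H. apply close_iff; auto. Qed.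

Lemma cont_X0 W : cont X0 W. Proof. apply (cont_cd K0). Qed.
Lemma cont_X1 W : cont X1 W. Proof. apply (cont_cd K1). Qed.
Lemma cont_X2 W : cont X2 W. Proof. apply (cont_cd K2). Qed.
Lemma cont_X3 W : cont X3 W. Proof. apply (cont_cd K3). Qed.

Lemma close_mono X Y e e' : e <= e' -> close X Y e -> close X Y e'.
Proof. rewrite !close_iff; intros H1 H2 c; specialize (H2 c); lra. Qed.

Lemma cont_plus f g W : cont f W -> cont g W -> cont (fun X => f X + g X)%C W.
Proof.
  intros Hf Hg e He.
  destruct (Hf (e/2)) as [d1 [Hd1 H1]]; [lra|].
  destruct (Hg (e/2)) as [d2 [Hd2 H2]]; [lra|].
  exists (Rmin d1 d2); split; [now apply Rmin_pos|].
  intros X HX.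
  specialize (H1 X (close_mono _ _ _ _ (Rmin_l _ _) HX)).
  specialize (H2 X (close_mono _ _ _ _ (Rmin_r _ _) HX)).
  replace (f W + g W - (f X + g X))%C with ((f W - f X) + (g W - g X))%C by ring.
  eapply Rle_lt_trans; [apply Cmod_triangle|]. lra.
Qed.

Lemma cont_opp f W : cont f W -> cont (fun X => - f X)%C W.
Proof.
  intros Hf e He. destruct (Hf e He) as [d [Hd H]]. exists d; split; auto.
  intros X HX. replace (- f W - - f X)%C with (- (f W - f X))%C by ring.
  rewrite Cmod_opp; auto.
Qed.

Lemma cont_minus f g W : cont f W -> cont g W -> cont (fun X => f X - g X)%C W.
Proof. intros; apply cont_plus; auto; apply cont_opp; auto. Qed.

Lemma cont_mult f g W : cont f W -> cont g W -> cont (fun X => f X * g X)%C W.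
Proof.
  intros Hf Hg e He.
  set (A := Cmod (f W)). set (B := Cmod (g W)).
  assert (HA : 0 <= A) by apply Cmod_ge_0. assert (HB : 0 <= B) by apply Cmod_ge_0.
  destruct (Hg (Rmin 1 (e / (2 * (A + 1))))) as [d1 [Hd1 H1]].
  { apply Rmin_pos; [lra|]. apply Rdiv_lt_0_compat; lra. }
  destruct (Hf (e / (2 * (B + 2)))) as [d2 [Hd2 H2]].
  { apply Rdiv_lt_0_compat; lra. }
  exists (Rmin d1 d2); split; [now apply Rmin_pos|].
  intros X HX.
  specialize (H1 X (close_mono _ _ _ _ (Rmin_l _ _) HX)).
  specialize (H2 X (close_mono _ _ _ _ (Rmin_r _ _) HX)).
  replace (f W * g W - f X * g X)%C with (f W * (g W - g X) + (f W - f X) * g X)%C by ring.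
  eapply Rle_lt_trans; [apply Cmod_triangle|]. rewrite !Cmod_mult.
  assert (Hg1 : Cmod (g W - g X) < 1) by (eapply Rlt_le_trans; [apply H1|apply Rmin_l]).
  assert (Hg2 : Cmod (g W - g X) < e / (2 * (A + 1))) by (eapply Rlt_le_trans; [apply H1|apply Rmin_r]).
  assert (HgX : Cmod (g X) <= B + 1).
  { pose proof (Cmod_sub_le (g X) (g W)). rewrite Cmod_sub_sym in H. unfold B. lra. }
  assert (E1 : A * Cmod (g W - g X) <= e / 2).
  { apply Rle_trans with (A * (e / (2 * (A + 1)))).
    - apply Rmult_le_compat_l; lra.
    - unfold Rdiv. rewrite Rinv_mult. 
      apply Rle_trans with ((A + 1) * (e * (/ 2 * / (A + 1)))).
      + apply Rmult_le_compat_r; [|lra].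
        apply Rmult_le_pos; [lra|]. apply Rmult_le_pos; [lra|]. left; apply Rinv_0_lt_compat; lra.
      + right. field. lra. }
  assert (E2 : Cmod (f W - f X) * Cmod (g X) < e / 2).
  { apply Rle_lt_trans with (Cmod (f W - f X) * (B + 2)).
    - apply Rmult_le_compat_l; [apply Cmod_ge_0|lra].
    - apply Rlt_le_trans with (e / (2 * (B + 2)) * (B + 2)).
      + apply Rmult_lt_compat_r; lra.
      + right; field; lra. }
  change (Cmod (f W)) with A. lra.
Qed.

Ltac solve_cont :=
  repeat first
    [ apply cont_plus | apply cont_minus | apply cont_mult | apply cont_opp
    | apply cont_X0 | apply cont_X1 | apply cont_X2 | apply cont_X3 | apply cont_const ].

Lemma test_cont (t : C) W : cont (fun X => X1 X * X2 X - t * X0 X + X3 X)%C W.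
Proof. solve_cont. Qed.


Section S2.
Variables t1 t2 t3 t4 : C.

Definition Seq (X : V4) : C :=
  (X1 X * X2 X * X3 X
   + X0 X * (X1 X * X1 X + X2 X * X2 X + X3 X * X3 X)
   - X0 X * X0 X * (t1 * X1 X + t2 * X2 X + t3 * X3 X)
   + t4 * (X0 X * X0 X * X0 X))%C.

Lemma on_S_iff X : on_S t1 t2 t3 t4 X <-> nzv X /\ Seq X = 0%C.
Proof. reflexivity. Qed.

Notation sig := (sigma_formula t1 t2 t3).
Notation ev := (eval_word t1 t2 t3).
Notation dfd := (defined_at t1 t2 t3).

Lemma Seq_scale (l : C) X : Seq (scale l X) = (l * l * l * Seq X)%C.
Proof. destruct X; unfold Seq, scale; simpl; ring. Qed.

Lemma nzv_scale (l : C) X : l <> 0%C -> nzv X -> nzv (scale l X).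
Proof.
  intros Hl HX. apply nzv_iff in HX as [c Hc]. apply nzv_iff. exists c.
  rewrite cd_scale. now apply Cmult_neq0.
Qed.

Lemma nzv_scale_inv (l : C) X : nzv (scale l X) -> l <> 0%C /\ nzv X.
Proof.
  intros H. apply nzv_iff in H as [c Hc]. rewrite cd_scale in Hc. split.
  - intros E; apply Hc; rewrite E; ring.
  - apply nzv_iff; exists c; intros E; apply Hc; rewrite E; ring.
Qed.

Lemma on_S_scale (l : C) X : l <> 0%C -> on_S t1 t2 t3 t4 X -> on_S t1 t2 t3 t4 (scale l X).
Proof.
  intros Hl [HX HS]. split; [now apply nzv_scale|]. fold (Seq (scale l X)).
  rewrite Seq_scale. change (Seq X = 0%C) in HS. rewrite HS; ring.
Qed.

Lemma sig_scale i (l : C) X : sig i (scale l X) = scale (l * l) (sig i X).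
Proof. destruct i, X; unfold scale; simpl; f_equal; ring. Qed.

Lemma X0_sig i X : X0 (sig i X) = (X0 X * X0 X)%C.
Proof. destruct i; reflexivity. Qed.

Lemma Seq_sig i X : Seq (sig i X) = (X0 X * X0 X * X0 X * Seq X)%C.
Proof. destruct i, X; unfold Seq; simpl; ring. Qed.

Lemma on_S_sig i X : on_S t1 t2 t3 t4 X -> nzv (sig i X) -> on_S t1 t2 t3 t4 (sig i X).
Proof.
  intros [HX HS] Hn. split; auto. fold (Seq (sig i X)). rewrite Seq_sig.
  change (Seq X = 0%C) in HS. rewrite HS; ring.
Qed.

Lemma dfd_nz w X : dfd w X -> nzv (ev w X).
Proof. destruct w; simpl; tauto. Qed.

Lemma dfd_tail i w X : dfd (i :: w) X -> dfd w X.
Proof. simpl; tauto. Qed.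

Lemma on_S_eval w X : on_S t1 t2 t3 t4 X -> dfd w X -> on_S t1 t2 t3 t4 (ev w X).
Proof.
  induction w as [|i w IH]; simpl; auto.
  intros HS [Hd Hn]. apply on_S_sig; auto.
Qed.

Lemma eval_scale w (l : C) X : l <> 0%C -> exists c : C, c <> 0%C /\ ev w (scale l X) = scale c (ev w X).
Proof.
  intros Hl. induction w as [|i w IH]; simpl.
  - exists l; auto.
  - destruct IH as [c [Hc E]]. rewrite E, sig_scale. exists (c * c)%C; split; auto.
    now apply Cmult_neq0.
Qed.

Lemma dfd_scale w (l : C) X : l <> 0%C -> dfd w X -> dfd w (scale l X).
Proof.
  intros Hl. induction w as [|i w IH]; simpl.
  - intros; now apply nzv_scale.
  - intros [Hd Hn]. split; auto. destruct (eval_scale w l X Hl) as [c [Hc E]].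
    rewrite E, sig_scale. apply nzv_scale; auto. now apply Cmult_neq0.
Qed.

Lemma affine_eval w X : X0 X <> 0%C -> X0 (ev w X) <> 0%C.
Proof.
  induction w as [|i w IH]; simpl; auto. intros H. rewrite X0_sig. apply Cmult_neq0; auto.
Qed.

Lemma nzv_of_X0 X : X0 X <> 0%C -> nzv X.
Proof. intros H; apply nzv_iff; exists K0; auto. Qed.

Lemma affine_dfd w X : X0 X <> 0%C -> dfd w X.
Proof.
  induction w as [|i w IH]; simpl; intros H.
  - now apply nzv_of_X0.
  - split; auto. apply nzv_of_X0. rewrite X0_sig. apply Cmult_neq0; now apply affine_eval.
Qed.

Lemma sig_sig i X : X0 X <> 0%C -> sig i (sig i X) = scale (X0 X * X0 X * X0 X) X.
Proof. intros _. destruct i, X; unfold scale; simpl; f_equal; ring. Qed.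

Lemma eval_app w1 w2 X : ev (w1 ++ w2) X = ev w1 (ev w2 X).
Proof. induction w1; simpl; congruence. Qed.

Lemma eval_rev w X : X0 X <> 0%C -> exists c : C, c <> 0%C /\ ev (rev w) (ev w X) = scale c X.
Proof.
  induction w as [|i w IH]; simpl; intros H.
  - exists 1%C; split. { apply RtoC_neq0; lra. }
    apply V4_ext; intros c; rewrite cd_scale; ring.
  - rewrite eval_app. simpl. set (Y := ev w X).
    assert (HY : X0 Y <> 0%C) by now apply affine_eval.
    rewrite sig_sig by auto.
    destruct (eval_scale (rev w) (X0 Y * X0 Y * X0 Y) Y) as [c1 [Hc1 E1]].
    { repeat apply Cmult_neq0; auto. }
    rewrite E1. destruct (IH H) as [c [Hc E]]. unfold Y; rewrite E.
    exists (c1 * c)%C; split; [now apply Cmult_neq0|].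
    apply V4_ext; intros k; rewrite !cd_scale; ring.
Qed.

Lemma inf_two i j Y : X0 Y = 0%C -> sig i (sig j Y) = v4zero.
Proof.
  destruct Y as [a x y z]; simpl; intros ->.
  destruct i, j; unfold v4zero; simpl; f_equal; ring.
Qed.

Lemma X0_eval_inf w X : X0 X = 0%C -> X0 (ev w X) = 0%C.
Proof.
  induction w as [|i w IH]; simpl; auto. intros H. rewrite X0_sig, IH; auto; ring.
Qed.

Lemma dfd_inf_short i j w X : X0 X = 0%C -> ~ dfd (i :: j :: w) X.
Proof.
  intros H [_ Hn]. simpl in Hn. rewrite inf_two in Hn; [apply Hn; reflexivity|].
  now apply X0_eval_inf.
Qed.

End S2.

Lemma proj_eq_refl X : nzv X -> proj_eq X X.
Proof.
  intros H; repeat split; auto. exists 1%C; split. { apply RtoC_neq0; lra. }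
  apply V4_ext; intros c; rewrite cd_scale; ring.
Qed.

Lemma proj_eq_sym X Y : proj_eq X Y -> proj_eq Y X.
Proof.
  intros [HX [HY [l [Hl E]]]]. repeat split; auto. exists (/ l)%C; split.
  - intros E'. apply Hl. replace l with (l * l * / l)%C by (field; auto). rewrite E'; ring.
  - subst. apply V4_ext; intros c; rewrite !cd_scale. field; auto.
Qed.

Lemma proj_eq_trans X Y Z : proj_eq X Y -> proj_eq Y Z -> proj_eq X Z.
Proof.
  intros [HX [HY [l [Hl E]]]] [_ [HZ [m [Hm E']]]]. repeat split; auto.
  exists (m * l)%C; split; [now apply Cmult_neq0|]. subst.
  apply V4_ext; intros c; rewrite !cd_scale; ring.
Qed.

Lemma proj_eq_scale X (l : C) : nzv X -> l <> 0%C -> proj_eq X (scale l X).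
Proof.
  intros H Hl. repeat split; auto. - apply nzv_scale; auto. - exists l; auto.
Qed.

Lemma proj_eq_minors W Y : nzv W -> nzv Y ->
  (forall c c', (cd c Y * cd c' W = cd c' Y * cd c W)%C) -> proj_eq W Y.
Proof.
  intros HW HY H. pose proof HW as HW'. apply nzv_iff in HW' as [c0 Hc0].
  set (l := (cd c0 Y / cd c0 W)%C).
  assert (E : forall c, cd c Y = (l * cd c W)%C).
  { intros c. unfold l. specialize (H c c0).
    apply (f_equal (fun u => u / cd c0 W)%C) in H.
    replace (cd c Y * cd c0 W / cd c0 W)%C with (cd c Y) in H by (field; auto).
    rewrite H. field; auto. }
  repeat split; auto. exists l; split.
  - intros El. apply HY. apply V4_ext; intros c. rewrite E, El. destruct c; simpl; ring.
  - apply V4_ext; intros c; rewrite cd_scale; auto.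
Qed.

Lemma proj_eq_cd X Y : proj_eq X Y -> forall c, cd c X = 0%C <-> cd c Y = 0%C.
Proof.
  intros [_ [_ [l [Hl ->]]]] c. rewrite cd_scale. split.
  - intros ->; ring.
  - intros E. destruct (Cmult_eq0 _ _ E); auto. contradiction.
Qed.

Lemma proj_eq_nzv X Y : proj_eq X Y -> nzv X /\ nzv Y.
Proof. unfold proj_eq; tauto. Qed.

Definition ci (i : idx) : c4 := match i with I1 => K1 | I2 => K2 | I3 => K3 end.
Lemma coord_ci i X : coord i X = cd (ci i) X.
Proof. destruct i; reflexivity. Qed.

Lemma nzv_pt i : nzv (pt i).
Proof. apply nzv_iff; exists (ci i); destruct i; simpl; apply RtoC_neq0; lra. Qed.

Lemma pt_iff i Y : proj_eq (pt i) Y <->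
  (forall c, c <> ci i -> cd c Y = 0%C) /\ cd (ci i) Y <> 0%C.
Proof.
  split.
  - intros [_ [HY [l [Hl ->]]]]. split.
    + intros c Hc. rewrite cd_scale. destruct i, c; simpl in *; try congruence; ring.
    + rewrite cd_scale. destruct i; simpl; rewrite Cmult_1_r; auto.
  - intros [H0 H1]. repeat split.
    + apply nzv_pt.
    + apply nzv_iff; eauto.
    + exists (cd (ci i) Y); split; auto. apply V4_ext; intros c. rewrite cd_scale.
      destruct (classic (c = ci i)) as [->|Hc].
      * destruct i; simpl; ring.
      * rewrite (H0 c Hc). destruct i, c; simpl in *; try congruence; ring.
Qed.


Lemma near_nzv W : nzv W -> exists d, 0 < d /\ forall X, close W X d -> nzv X.
Proof.
  intros H. apply nzv_iff in H as [c Hc]. exists (Cmod (cd c W)). split.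
  - now apply Cmod_gt_0.
  - intros X HX. apply nzv_iff. exists c. intros E. rewrite close_iff in HX.
    specialize (HX c). rewrite E in HX. replace (cd c W - 0)%C with (cd c W) in HX by ring. lra.
Qed.

Lemma near_nz f W : cont f W -> f W <> 0%C -> exists d, 0 < d /\ forall X, close W X d -> f X <> 0%C.
Proof.
  intros Hf H. destruct (Hf (Cmod (f W))) as [d [Hd H']]; [now apply Cmod_gt_0|].
  exists d; split; auto. intros X HX E. specialize (H' X HX). rewrite E in H'.
  replace (f W - 0)%C with (f W) in H' by ring. lra.
Qed.

Lemma cont_vec (F : V4 -> V4) W : (forall c, cont (fun X => cd c (F X)) W) ->
  forall e, 0 < e -> exists d, 0 < d /\ forall X, close W X d -> close (F W) (F X) e.
Proof.
  intros H e He.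
  destruct (H K0 e He) as [d0 [Hd0 H0]]. destruct (H K1 e He) as [d1 [Hd1 H1]].
  destruct (H K2 e He) as [d2 [Hd2 H2]]. destruct (H K3 e He) as [d3 [Hd3 H3]].
  exists (Rmin (Rmin d0 d1) (Rmin d2 d3)). split.
  { repeat apply Rmin_pos; auto. }
  intros X HX. apply close_iff. intros c.
  assert (Hm1 := Rmin_l (Rmin d0 d1) (Rmin d2 d3)). assert (Hm2 := Rmin_r (Rmin d0 d1) (Rmin d2 d3)).
  assert (Hm3 := Rmin_l d0 d1). assert (Hm4 := Rmin_r d0 d1).
  assert (Hm5 := Rmin_l d2 d3). assert (Hm6 := Rmin_r d2 d3).
  destruct c; [apply H0|apply H1|apply H2|apply H3]; eapply close_mono; try apply HX; lra.
Qed.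

Section S3.
Variables t1 t2 t3 t4 : C.
Notation sig := (sigma_formula t1 t2 t3).
Notation ev := (eval_word t1 t2 t3).
Notation dfd := (defined_at t1 t2 t3).
Notation onS := (on_S t1 t2 t3 t4).
Notation Sq := (Seq t1 t2 t3 t4).

Definition cont_at1 (i : idx) (W W' : V4) : Prop :=
  forall e, 0 < e -> exists d, 0 < d /\ forall X (l : C), onS X -> nzv (sig i X) ->
    close W (scale l X) d -> exists m : C, close W' (scale m (sig i X)) e.

Lemma CL i (h k : V4 -> C) (F : V4 -> V4) W :
  (forall X, Sq X = 0%C -> forall c, (h X * cd c (sig i X) = k X * cd c (F X))%C) ->
  cont h W -> (forall c, cont (fun X => cd c (F X)) W) -> h W <> 0%C -> nzv W ->
  cont_at1 i W (F W).
Proof.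
  intros Hid Hh HF HhW HW e He.
  destruct (near_nz h W Hh HhW) as [d1 [Hd1 H1]].
  destruct (near_nzv W HW) as [d2 [Hd2 H2]].
  destruct (cont_vec F W HF e He) as [d3 [Hd3 H3]].
  exists (Rmin d1 (Rmin d2 d3)). split. { repeat apply Rmin_pos; auto. }
  intros X l HS Hn HX.
  assert (Hm1 := Rmin_l d1 (Rmin d2 d3)). assert (Hm2 := Rmin_r d1 (Rmin d2 d3)).
  assert (Hm3 := Rmin_l d2 d3). assert (Hm4 := Rmin_r d2 d3).
  set (Z := scale l X) in *.
  assert (HZn : nzv Z) by (apply H2; eapply close_mono; [|apply HX]; lra).
  destruct (nzv_scale_inv l X HZn) as [Hl _].
  assert (HZS : Sq Z = 0%C).
  { unfold Z. rewrite Seq_scale. destruct HS as [_ HS]. change (Sq X = 0%C) in HS. rewrite HS; ring. }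
  assert (HhZ : h Z <> 0%C) by (apply H1; eapply close_mono; [|apply HX]; lra).
  assert (HsZ : sig i Z = scale (l * l) (sig i X)) by (unfold Z; apply sig_scale).
  assert (HkZ : k Z <> 0%C).
  { intros Ek. assert (Hn2 : nzv (sig i Z)).
    { rewrite HsZ. apply nzv_scale; auto. now apply Cmult_neq0. }
    apply nzv_iff in Hn2 as [c Hc]. pose proof (Hid Z HZS c) as E. rewrite Ek in E.
    rewrite Cmult_0_l in E; apply Cmult_eq0 in E as [E|E]; [contradiction|]. apply Hc. rewrite E. ring. }
  exists (h Z * (l * l) / k Z)%C.
  assert (E : scale (h Z * (l * l) / k Z) (sig i X) = F Z).
  { apply V4_ext. intros c. rewrite cd_scale. pose proof (Hid Z HZS c) as E.
    rewrite HsZ, cd_scale in E.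
    apply (f_equal (fun u => u / k Z)%C) in E.
    replace (k Z * cd c (F Z) / k Z)%C with (cd c (F Z)) in E by (field; auto).
    rewrite <- E. field; auto. }
  rewrite E. apply H3. eapply close_mono; [|apply HX]; lra.
Qed.

Definition interior (k : idx) (W : V4) : Prop :=
  X0 W = 0%C /\ coord k W = 0%C /\ forall j, j <> k -> coord j W <> 0%C.

Lemma pt_of_zeros i Y : nzv Y -> (forall c, c <> ci i -> cd c Y = 0%C) -> proj_eq (pt i) Y.
Proof.
  intros HY H. apply pt_iff. split; auto. intros E. apply HY. apply V4_ext; intros c.
  destruct (classic (c = ci i)) as [ -> | Hc]. - rewrite E; destruct i; reflexivity.
  - rewrite H by auto. destruct c; reflexivity.
Qed.

Definition Qf (X : V4) : C :=
  (X1 X * X1 X + X2 X * X2 X + X3 X * X3 X - X0 X * (t1 * X1 X + t2 * X2 X + t3 * X3 X)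
   + t4 * X0 X * X0 X)%C.

Definition F1 (X : V4) : V4 :=
  mkV4 (X0 X * X1 X) (X2 X * X2 X + X3 X * X3 X - X0 X * (t2 * X2 X + t3 * X3 X) + t4 * X0 X * X0 X)
       (X1 X * X2 X) (X1 X * X3 X).
Definition F2 (X : V4) : V4 :=
  mkV4 (X0 X * X2 X) (X2 X * X1 X)
       (X1 X * X1 X + X3 X * X3 X - X0 X * (t1 * X1 X + t3 * X3 X) + t4 * X0 X * X0 X)
       (X2 X * X3 X).
Definition F3 (X : V4) : V4 :=
  mkV4 (X0 X * X3 X) (X3 X * X1 X) (X3 X * X2 X)
       (X1 X * X1 X + X2 X * X2 X - X0 X * (t1 * X1 X + t2 * X2 X) + t4 * X0 X * X0 X).

Ltac id_by k :=
  match goal with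
  | HS : Seq _ _ _ _ ?X = _ |- ?A = ?B =>
    transitivity (B + k * Sq X)%C; [unfold Seq, Qf; simpl; ring | rewrite HS; ring]
  end.

Lemma id1a X : Sq X = 0%C -> forall c, (X1 X * cd c (sig I1 X) = X0 X * cd c (F1 X))%C.
Proof. intros HS c; destruct c; simpl; [id_by (RtoC 0)|id_by (RtoC (-1))|id_by (RtoC 0)|id_by (RtoC 0)]. Qed.
Lemma id1b X : Sq X = 0%C -> forall c, (Qf X * cd c (sig I1 X) = - (X2 X * X3 X) * cd c (F1 X))%C.
Proof. intros HS c; destruct c; simpl; [id_by (X0 X)|id_by (t1 * X0 X - X1 X)%C|id_by (X2 X)|id_by (X3 X)]. Qed.
Lemma id2a X : Sq X = 0%C -> forall c, (X2 X * cd c (sig I2 X) = X0 X * cd c (F2 X))%C.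
Proof. intros HS c; destruct c; simpl; [id_by (RtoC 0)|id_by (RtoC 0)|id_by (RtoC (-1))|id_by (RtoC 0)]. Qed.
Lemma id2b X : Sq X = 0%C -> forall c, (Qf X * cd c (sig I2 X) = - (X1 X * X3 X) * cd c (F2 X))%C.
Proof. intros HS c; destruct c; simpl; [id_by (X0 X)|id_by (X1 X)|id_by (t2 * X0 X - X2 X)%C|id_by (X3 X)]. Qed.
Lemma id3a X : Sq X = 0%C -> forall c, (X3 X * cd c (sig I3 X) = X0 X * cd c (F3 X))%C.
Proof. intros HS c; destruct c; simpl; [id_by (RtoC 0)|id_by (RtoC 0)|id_by (RtoC 0)|id_by (RtoC (-1))]. Qed.
Lemma id3b X : Sq X = 0%C -> forall c, (Qf X * cd c (sig I3 X) = - (X1 X * X2 X) * cd c (F3 X))%C.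
Proof. intros HS c; destruct c; simpl; [id_by (X0 X)|id_by (X1 X)|id_by (X2 X)|id_by (t3 * X0 X - X3 X)%C]. Qed.

End S3.


Section S4.
Variables t1 t2 t3 t4 : C.
Notation sig := (sigma_formula t1 t2 t3).
Notation onS := (on_S t1 t2 t3 t4).
Notation Sq := (Seq t1 t2 t3 t4).

Definition step_spec i W W' :=
  onS W' /\ cont_at1 t1 t2 t3 t4 i W W' /\ (X0 W <> 0%C -> X0 W' <> 0%C) /\
  (on_L i W -> proj_eq (pt i) W') /\ (forall k, k <> i -> interior k W -> interior k W').

Lemma sq_neq0 (z : C) : z <> 0%C -> (z * z <> 0)%C.
Proof. intros; now apply Cmult_neq0. Qed.

Lemma sig_nzv_case i W : onS W -> nzv (sig i W) -> step_spec i W (sig i W).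
Proof.
  intros HS Hs. pose proof HS as [HWn HWS]. unfold step_spec. split; [apply on_S_sig; auto|]. split.
  { apply (CL t1 t2 t3 t4 i (fun _ => 1%C) (fun _ => 1%C) (sig i) W).
    - intros; reflexivity.
    - apply cont_const.
    - intros c; destruct i, c; simpl; solve_cont.
    - apply RtoC_neq0; lra.
    - auto. }
  split; [intros H; rewrite X0_sig; now apply Cmult_neq0|].
  split.
  - intros [_ [Ha Hx]]. apply pt_of_zeros; auto. intros c Hc.
    destruct W as [a x y z]; destruct i; simpl in *; subst;
      destruct c; simpl in *; try congruence; ring.
  - intros k Hk [Ha [Hc Hj]]. exfalso. apply Hs. destruct W as [a x y z]; simpl in *.
    subst a. unfold v4zero.
    destruct i, k; try congruence; simpl in Hc; subst; simpl; f_equal; ring.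
Qed.

Lemma sig_zero i (W : V4) : ~ nzv (sig i W) -> sig i W = v4zero.
Proof. unfold nzv; intros H; now apply NNPP. Qed.

Lemma step1 W : onS W -> ~ proj_eq (pt I1) W -> exists W', step_spec I1 W W'.
Proof.
  intros HS Hp. destruct (classic (nzv (sig I1 W))) as [Hs|Hs].
  { exists (sig I1 W); now apply sig_nzv_case. }
  apply sig_zero in Hs. destruct HS as [HWn HWS]. change (Sq W = 0%C) in HWS.
  destruct W as [a x y z]. pose proof (f_equal X0 Hs) as E0. pose proof (f_equal X1 Hs) as E1.
  cbn [X0 X1 X2 X3 sigma_formula v4zero] in E0, E1.
  assert (Ha : a = 0%C) by (destruct (Cmult_eq0 _ _ E0); auto). subst a.
  assert (Hyz : (y * z = 0)%C) by (transitivity (- (t1 * 0 * 0 - 0 * x - y * z))%C; [ring | rewrite E1; ring]).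
  exists (F1 t2 t3 t4 (mkV4 0 x y z)). unfold step_spec.
  destruct (classic (x = 0%C)) as [Hx|Hx].
  - subst x.
    assert (Hq : (y * y + z * z <> 0)%C).
    { destruct (Cmult_eq0 _ _ Hyz) as [ -> | -> ].
      - replace (0 * 0 + z * z)%C with (z * z)%C by ring. apply sq_neq0. intros ->. apply HWn; reflexivity.
      - replace (y * y + 0 * 0)%C with (y * y)%C by ring. apply sq_neq0. intros ->. apply HWn; reflexivity. }
    assert (HF : (cd K1 (F1 t2 t3 t4 (mkV4 0 0 y z)) <> 0)%C).
    { simpl. replace (y * y + z * z - 0 * (t2 * y + t3 * z) + t4 * 0 * 0)%C with (y * y + z * z)%C by ring. auto. }
    split; [split; [apply nzv_iff; eauto | unfold Seq; simpl; ring]|].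
    split.
    { apply (CL t1 t2 t3 t4 I1 (Qf t1 t2 t3 t4) (fun X => - (X2 X * X3 X))%C (F1 t2 t3 t4)); [| | | |auto].
      - apply id1b.
      - unfold Qf; solve_cont.
      - intros c; destruct c; simpl; solve_cont.
      - unfold Qf; simpl. replace (0 * 0 + y * y + z * z - 0 * (t1 * 0 + t2 * y + t3 * z) + t4 * 0 * 0)%C
          with (y * y + z * z)%C by ring. auto. }
    split; [simpl; intros H; contradiction|].
    split.
    + intros _. apply pt_of_zeros; [apply nzv_iff; eauto|]. intros c Hc; destruct c; simpl in *; try congruence; ring.
    + intros k Hk [_ [_ Hj]]. exfalso. apply (Hj I1); [congruence|reflexivity].
  - assert (Hyz2 : y <> 0%C \/ z <> 0%C).
    { apply NNPP; intros H. apply Hp. apply pt_of_zeros; auto.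
      intros c Hc; destruct c; simpl in *; try congruence;
        apply NNPP; intros H'; apply H; auto. }
    split.
    { split.
      - apply nzv_iff. destruct Hyz2 as [Hy|Hz]; [exists K2|exists K3]; simpl; now apply Cmult_neq0.
      - unfold Seq; simpl. transitivity (x * x * (y * y + z * z) * (y * z))%C; [ring|]. rewrite Hyz; ring. }
    split.
    { apply (CL t1 t2 t3 t4 I1 X1 X0 (F1 t2 t3 t4)); [| | | |auto].
      - apply id1a.
      - solve_cont.
      - intros c; destruct c; simpl; solve_cont.
      - simpl; auto. }
    split; [simpl; intros H; contradiction|].
    split.
    + intros [_ [_ H]]. simpl in H. contradiction.
    + intros k Hk [_ [Hc Hj]]. destruct k; [congruence| |]; simpl in Hc; subst.
      * repeat split; simpl; try ring. intros j Hj'. destruct j; simpl; try congruence.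
        -- replace (0 * 0 + z * z - 0 * (t2 * 0 + t3 * z) + t4 * 0 * 0)%C with (z * z)%C by ring.
           apply sq_neq0. apply (Hj I3); congruence.
        -- apply Cmult_neq0; auto. apply (Hj I3); congruence.
      * repeat split; simpl; try ring. intros j Hj'. destruct j; simpl; try congruence.
        -- replace (y * y + 0 * 0 - 0 * (t2 * y + t3 * 0) + t4 * 0 * 0)%C with (y * y)%C by ring.
           apply sq_neq0. apply (Hj I2); congruence.
        -- apply Cmult_neq0; auto. apply (Hj I2); congruence.
Qed.

Lemma step2 W : onS W -> ~ proj_eq (pt I2) W -> exists W', step_spec I2 W W'.
Proof.
  intros HS Hp. destruct (classic (nzv (sig I2 W))) as [Hs|Hs].
  { exists (sig I2 W); now apply sig_nzv_case. }
  apply sig_zero in Hs. destruct HS as [HWn HWS]. change (Sq W = 0%C) in HWS.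
  destruct W as [a x y z]. pose proof (f_equal X0 Hs) as E0. pose proof (f_equal X2 Hs) as E1.
  cbn [X0 X1 X2 X3 sigma_formula v4zero] in E0, E1.
  assert (Ha : a = 0%C) by (destruct (Cmult_eq0 _ _ E0); auto). subst a.
  assert (Hyz : (x * z = 0)%C) by (transitivity (- (t2 * 0 * 0 - 0 * y - x * z))%C; [ring | rewrite E1; ring]).
  exists (F2 t1 t3 t4 (mkV4 0 x y z)). unfold step_spec.
  destruct (classic (y = 0%C)) as [Hy|Hy].
  - subst y.
    assert (Hq : (x * x + z * z <> 0)%C).
    { destruct (Cmult_eq0 _ _ Hyz) as [ -> | -> ].
      - replace (0 * 0 + z * z)%C with (z * z)%C by ring. apply sq_neq0. intros ->. apply HWn; reflexivity.
      - replace (x * x + 0 * 0)%C with (x * x)%C by ring. apply sq_neq0. intros ->. apply HWn; reflexivity. }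
    assert (HF : (cd K2 (F2 t1 t3 t4 (mkV4 0 x 0 z)) <> 0)%C).
    { simpl. replace (x * x + z * z - 0 * (t1 * x + t3 * z) + t4 * 0 * 0)%C with (x * x + z * z)%C by ring. auto. }
    split; [split; [apply nzv_iff; eauto | unfold Seq; simpl; ring]|].
    split.
    { apply (CL t1 t2 t3 t4 I2 (Qf t1 t2 t3 t4) (fun X => - (X1 X * X3 X))%C (F2 t1 t3 t4)); [| | | |auto].
      - apply id2b.
      - unfold Qf; solve_cont.
      - intros c; destruct c; simpl; solve_cont.
      - unfold Qf; simpl. replace (x * x + 0 * 0 + z * z - 0 * (t1 * x + t2 * 0 + t3 * z) + t4 * 0 * 0)%C
          with (x * x + z * z)%C by ring. auto. }
    split; [simpl; intros H; contradiction|].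
    split.
    + intros _. apply pt_of_zeros; [apply nzv_iff; eauto|]. intros c Hc; destruct c; simpl in *; try congruence; ring.
    + intros k Hk [_ [_ Hj]]. exfalso. apply (Hj I2); [congruence|reflexivity].
  - assert (Hyz2 : x <> 0%C \/ z <> 0%C).
    { apply NNPP; intros H. apply Hp. apply pt_of_zeros; auto.
      intros c Hc; destruct c; simpl in *; try congruence;
        apply NNPP; intros H'; apply H; auto. }
    split.
    { split.
      - apply nzv_iff. destruct Hyz2 as [Hx|Hz]; [exists K1|exists K3]; simpl; now apply Cmult_neq0.
      - unfold Seq; simpl. transitivity (y * y * (x * x + z * z) * (x * z))%C; [ring|]. rewrite Hyz; ring. }
    split.
    { apply (CL t1 t2 t3 t4 I2 X2 X0 (F2 t1 t3 t4)); [| | | |auto].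
      - apply id2a.
      - solve_cont.
      - intros c; destruct c; simpl; solve_cont.
      - simpl; auto. }
    split; [simpl; intros H; contradiction|].
    split.
    + intros [_ [_ H]]. simpl in H. contradiction.
    + intros k Hk [_ [Hc Hj]]. destruct k; [ | congruence | ]; simpl in Hc; subst.
      * repeat split; simpl; try ring. intros j Hj'. destruct j; simpl; try congruence.
        -- replace (0 * 0 + z * z - 0 * (t1 * 0 + t3 * z) + t4 * 0 * 0)%C with (z * z)%C by ring.
           apply sq_neq0. apply (Hj I3); congruence.
        -- apply Cmult_neq0; auto. apply (Hj I3); congruence.
      * repeat split; simpl; try ring. intros j Hj'. destruct j; simpl; try congruence.
        -- apply Cmult_neq0; auto. apply (Hj I1); congruence.
        -- replace (x * x + 0 * 0 - 0 * (t1 * x + t3 * 0) + t4 * 0 * 0)%C with (x * x)%C by ring.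
           apply sq_neq0. apply (Hj I1); congruence.
Qed.

Lemma step3 W : onS W -> ~ proj_eq (pt I3) W -> exists W', step_spec I3 W W'.
Proof.
  intros HS Hp. destruct (classic (nzv (sig I3 W))) as [Hs|Hs].
  { exists (sig I3 W); now apply sig_nzv_case. }
  apply sig_zero in Hs. destruct HS as [HWn HWS]. change (Sq W = 0%C) in HWS.
  destruct W as [a x y z]. pose proof (f_equal X0 Hs) as E0. pose proof (f_equal X3 Hs) as E1.
  cbn [X0 X1 X2 X3 sigma_formula v4zero] in E0, E1.
  assert (Ha : a = 0%C) by (destruct (Cmult_eq0 _ _ E0); auto). subst a.
  assert (Hyz : (x * y = 0)%C) by (transitivity (- (t3 * 0 * 0 - 0 * z - x * y))%C; [ring | rewrite E1; ring]).
  exists (F3 t1 t2 t4 (mkV4 0 x y z)). unfold step_spec.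
  destruct (classic (z = 0%C)) as [Hz|Hz].
  - subst z.
    assert (Hq : (x * x + y * y <> 0)%C).
    { destruct (Cmult_eq0 _ _ Hyz) as [ -> | -> ].
      - replace (0 * 0 + y * y)%C with (y * y)%C by ring. apply sq_neq0. intros ->. apply HWn; reflexivity.
      - replace (x * x + 0 * 0)%C with (x * x)%C by ring. apply sq_neq0. intros ->. apply HWn; reflexivity. }
    assert (HF : (cd K3 (F3 t1 t2 t4 (mkV4 0 x y 0)) <> 0)%C).
    { simpl. replace (x * x + y * y - 0 * (t1 * x + t2 * y) + t4 * 0 * 0)%C with (x * x + y * y)%C by ring. auto. }
    split; [split; [apply nzv_iff; eauto | unfold Seq; simpl; ring]|].
    split.
    { apply (CL t1 t2 t3 t4 I3 (Qf t1 t2 t3 t4) (fun X => - (X1 X * X2 X))%C (F3 t1 t2 t4)); [| | | |auto].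
      - apply id3b.
      - unfold Qf; solve_cont.
      - intros c; destruct c; simpl; solve_cont.
      - unfold Qf; simpl. replace (x * x + y * y + 0 * 0 - 0 * (t1 * x + t2 * y + t3 * 0) + t4 * 0 * 0)%C
          with (x * x + y * y)%C by ring. auto. }
    split; [simpl; intros H; contradiction|].
    split.
    + intros _. apply pt_of_zeros; [apply nzv_iff; eauto|]. intros c Hc; destruct c; simpl in *; try congruence; ring.
    + intros k Hk [_ [_ Hj]]. exfalso. apply (Hj I3); [congruence|reflexivity].
  - assert (Hyz2 : x <> 0%C \/ y <> 0%C).
    { apply NNPP; intros H. apply Hp. apply pt_of_zeros; auto.
      intros c Hc; destruct c; simpl in *; try congruence;
        apply NNPP; intros H'; apply H; auto. }
    split.
    { split.
      - apply nzv_iff. destruct Hyz2 as [Hx|Hy]; [exists K1|exists K2]; simpl; now apply Cmult_neq0.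
      - unfold Seq; simpl. transitivity (z * z * (x * x + y * y) * (x * y))%C; [ring|]. rewrite Hyz; ring. }
    split.
    { apply (CL t1 t2 t3 t4 I3 X3 X0 (F3 t1 t2 t4)); [| | | |auto].
      - apply id3a.
      - solve_cont.
      - intros c; destruct c; simpl; solve_cont.
      - simpl; auto. }
    split; [simpl; intros H; contradiction|].
    split.
    + intros [_ [_ H]]. simpl in H. contradiction.
    + intros k Hk [_ [Hc Hj]]. destruct k; [ | | congruence ]; simpl in Hc; subst.
      * repeat split; simpl; try ring. intros j Hj'. destruct j; simpl; try congruence.
        -- apply Cmult_neq0; auto. apply (Hj I2); congruence.
        -- replace (0 * 0 + y * y - 0 * (t1 * 0 + t2 * y) + t4 * 0 * 0)%C with (y * y)%C by ring.
           apply sq_neq0. apply (Hj I2); congruence.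
      * repeat split; simpl; try ring. intros j Hj'. destruct j; simpl; try congruence.
        -- apply Cmult_neq0; auto. apply (Hj I1); congruence.
        -- replace (x * x + 0 * 0 - 0 * (t1 * x + t2 * 0) + t4 * 0 * 0)%C with (x * x)%C by ring.
           apply sq_neq0. apply (Hj I1); congruence.
Qed.

Lemma step i W : onS W -> ~ proj_eq (pt i) W -> exists W', step_spec i W W'.
Proof. destruct i; [apply step1|apply step2|apply step3]. Qed.

End S4.


Lemma pt_coord k W : proj_eq (pt k) W ->
  X0 W = 0%C /\ coord k W <> 0%C /\ forall j, j <> k -> coord j W = 0%C.
Proof.
  intros H. apply pt_iff in H as [H0 H1]. split; [|split].
  - apply (H0 K0). destruct k; discriminate.
  - rewrite coord_ci; auto.
  - intros j Hj. rewrite coord_ci. apply H0. destruct j, k; simpl; congruence.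
Qed.

Lemma pt_distinct k j W : proj_eq (pt k) W -> proj_eq (pt j) W -> k = j.
Proof.
  intros Hk Hj. apply pt_coord in Hk as [_ [Hk _]]. apply pt_coord in Hj as [_ [_ Hj]].
  apply NNPP; intros E. apply Hk, Hj. congruence.
Qed.

Lemma pt_on_L k j W : proj_eq (pt k) W -> k <> j -> on_L j W.
Proof.
  intros H Hkj. pose proof (proj_eq_nzv _ _ H) as [_ Hn]. apply pt_coord in H as [H0 [_ H]].
  repeat split; auto.
Qed.

Lemma interior_notpt m j W : interior m W -> ~ proj_eq (pt j) W.
Proof.
  intros [H0 [Hm Hj]] Hp. apply pt_coord in Hp as [_ [Hpj Hp]].
  destruct (classic (m = j)) as [->|Hmj]; [contradiction|].
  assert (exists r, r <> m /\ r <> j) as [r [Hr1 Hr2]].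
  { destruct m, j; try congruence; [exists I3|exists I2|exists I3|exists I1|exists I2|exists I1]; split; congruence. }
  apply (Hj r Hr1). apply Hp; auto.
Qed.

Lemma interior_L m W : nzv W -> interior m W -> on_L m W.
Proof. intros Hn [H0 [Hm _]]. repeat split; auto. Qed.

Lemma interior_on_L m j Z : interior m Z -> on_L j Z -> m = j.
Proof.
  intros [_ [_ Hj]] [_ [_ Hc]]. apply NNPP; intros E. apply (Hj j); auto.
Qed.

Section S5.
Variables t1 t2 t3 t4 : C.
Notation sig := (sigma_formula t1 t2 t3).
Notation ev := (eval_word t1 t2 t3).
Notation dfd := (defined_at t1 t2 t3).
Notation onS := (on_S t1 t2 t3 t4).
Notation Sq := (Seq t1 t2 t3 t4).

Ltac solve_pt := apply pt_of_zeros; [auto | intros c Hc; destruct c; simpl in *; first [reflexivity | congruence]].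

Lemma xyz_cases (x y z : C) : (x * y * z = 0)%C -> x = 0%C \/ y = 0%C \/ z = 0%C.
Proof.
  intros H. destruct (Cmult_eq0 _ _ H) as [H'|H']; [|tauto].
  destruct (Cmult_eq0 _ _ H'); tauto.
Qed.

Lemma classify j Z : onS Z -> X0 Z = 0%C -> ~ on_L j Z -> ~ proj_eq (pt j) Z ->
  exists k, k <> j /\ interior k Z.
Proof.
  intros [Hn HS] H0 HL Hp. change (Sq Z = 0%C) in HS.
  assert (Hj : coord j Z <> 0%C) by (intros E; apply HL; repeat split; auto).
  destruct Z as [a x y z]; simpl in *; subst a.
  assert (Hp3 : (x * y * z = 0)%C) by (rewrite <- HS; unfold Seq; simpl; ring).
  destruct (xyz_cases _ _ _ Hp3) as [Ex|[Ey|Ez]];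
  destruct j; simpl in Hj; subst; try contradiction.
  - destruct (classic (z = 0%C)) as [->|Hz]; [exfalso; apply Hp; solve_pt|].
    exists I1; split; [discriminate|]. repeat split; simpl; auto.
    intros j' Hj'; destruct j'; simpl; congruence.
  - destruct (classic (y = 0%C)) as [->|Hy]; [exfalso; apply Hp; solve_pt|].
    exists I1; split; [discriminate|]. repeat split; simpl; auto.
    intros j' Hj'; destruct j'; simpl; congruence.
  - destruct (classic (z = 0%C)) as [->|Hz]; [exfalso; apply Hp; solve_pt|].
    exists I2; split; [discriminate|]. repeat split; simpl; auto.
    intros j' Hj'; destruct j'; simpl; congruence.
  - destruct (classic (x = 0%C)) as [->|Hx]; [exfalso; apply Hp; solve_pt|].
    exists I2; split; [discriminate|]. repeat split; simpl; auto.
    intros j' Hj'; destruct j'; simpl; congruence.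
  - destruct (classic (y = 0%C)) as [->|Hy]; [exfalso; apply Hp; solve_pt|].
    exists I3; split; [discriminate|]. repeat split; simpl; auto.
    intros j' Hj'; destruct j'; simpl; congruence.
  - destruct (classic (x = 0%C)) as [->|Hx]; [exfalso; apply Hp; solve_pt|].
    exists I3; split; [discriminate|]. repeat split; simpl; auto.
    intros j' Hj'; destruct j'; simpl; congruence.
Qed.

Definition cont_w (w : list idx) (Z W : V4) : Prop :=
  forall e, 0 < e -> exists d, 0 < d /\ forall X (l : C), onS X -> dfd w X ->
    close Z (scale l X) d -> exists m : C, close W (scale m (ev w X)) e.

Lemma cont_w_nil Z : cont_w [] Z Z.
Proof.
  intros e He. exists e; split; auto. intros X l _ _ H. exists l. exact H.
Qed.

Lemma cont_w_cons i w Z W W' : cont_w w Z W -> cont_at1 t1 t2 t3 t4 i W W' -> cont_w (i :: w) Z W'.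
Proof.
  intros Hw Hi e He. destruct (Hi e He) as [d1 [Hd1 H1]].
  destruct (Hw d1 Hd1) as [d [Hd H]]. exists d; split; auto.
  intros X l HS [Hdf Hn] HX. destruct (H X l HS Hdf HX) as [m Hm].
  apply (H1 (ev w X) m); auto. apply on_S_eval; auto.
Qed.

Definition Inv (j : idx) (w : list idx) (Z W : V4) : Prop :=
  cont_w (j :: w) Z W /\ onS W /\ (X0 Z <> 0%C -> X0 W <> 0%C) /\
  (forall i, In i (j :: w) -> on_L i Z -> proj_eq (pt j) W) /\
  (X0 Z = 0%C -> (forall i, In i (j :: w) -> ~ on_L i Z) ->
     exists k, ~ In k (j :: w) /\ interior k Z /\ interior k W).

Lemma last_indep (k : idx) l d d' : last (k :: l) d = last (k :: l) d'.
Proof.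
  revert k. induction l as [|a l IH]; intros k; simpl; auto.
  specialize (IH a). simpl in IH. destruct l; auto.
Qed.

Lemma affine_notpt j W : X0 W <> 0%C -> ~ proj_eq (pt j) W.
Proof. intros H Hp. apply pt_coord in Hp as [Hp _]. contradiction. Qed.

Lemma main_inv w : forall j, no_repeat (j :: w) -> forall Z, onS Z ->
  ~ proj_eq (pt (last (j :: w) j)) Z -> exists W, Inv j w Z W.
Proof.
  induction w as [|k w IH]; intros j Hnr Z HZ Hp.
  - simpl in Hp. destruct (step t1 t2 t3 t4 j Z HZ Hp) as [W' [HS' [Hc' [Ha' [Hb' Hd']]]]].
    exists W'. split; [|split; [auto|split; [auto|split]]].
    + apply cont_w_cons with Z; auto. apply cont_w_nil.
    + intros i Hi HL. destruct Hi as [<-|[]]. auto.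
    + intros H0 HnL. destruct (classify j Z HZ H0 (HnL j (or_introl eq_refl)) Hp) as [k [Hk Hint]].
      exists k. split; [simpl; intuition congruence|]. split; auto.
  - destruct Hnr as [Hjk Hnr].
    assert (Hp' : ~ proj_eq (pt (last (k :: w) k)) Z).
    { rewrite (last_indep k w k j). exact Hp. }
    destruct (IH k Hnr Z HZ Hp') as [W [Hc [HS [Ha [Hb Hd]]]]].
    assert (HWp : ~ proj_eq (pt j) W).
    { destruct (classic (exists i, In i (k :: w) /\ on_L i Z)) as [[i [Hi HL]]|Hno].
      - intros Hpj. apply Hjk. symmetry. apply (pt_distinct k j W); eauto.
      - destruct (classic (X0 Z = 0%C)) as [H0|H0].
        + destruct Hd as [m [_ [_ Hm]]]; auto. { intros i0 Hi0 HL0; apply Hno; eauto. }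
          eapply interior_notpt; eauto.
        + apply affine_notpt; auto. }
    destruct (step t1 t2 t3 t4 j W HS HWp) as [W' [HS' [Hc' [Ha' [Hb' Hd']]]]].
    exists W'. split; [|split; [auto|split; [auto|split]]].
    + apply cont_w_cons with W; auto.
    + intros i Hi HL.
      destruct (classic (exists i, In i (k :: w) /\ on_L i Z)) as [[i' [Hi' HL']]|Hno].
      * apply Hb'. eapply pt_on_L; eauto.
      * assert (i = j) as ->.
        { destruct Hi as [<-|Hi]; auto. exfalso; eauto. }
        destruct HL as [HZn [H0 Hj]].
        destruct Hd as [m [Hm [HmZ HmW]]]; auto. { intros i0 Hi0 HL0; apply Hno; eauto. }
        assert (m = j) as -> by (apply (interior_on_L m j Z HmZ); repeat split; auto).
        apply Hb'. apply interior_L; auto. destruct HS; auto.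
    + intros H0 HnL. destruct Hd as [m [Hm [HmZ HmW]]]; auto.
      { intros i Hi HL. apply (HnL i); simpl; auto. }
      assert (Hmj : m <> j).
      { intros ->. apply (HnL j); [simpl; auto|]. apply interior_L; auto. destruct HZ; auto. }
      exists m. split; [|split; auto].
      intros [E|E]; [congruence|contradiction].
Qed.

End S5.


Lemma scale1 X : scale 1%C X = X.
Proof. apply V4_ext; intros c; rewrite cd_scale; ring. Qed.

Lemma scale_scale (c l : C) X : scale c (scale l X) = scale (c * l) X.
Proof. apply V4_ext; intros k; rewrite !cd_scale; ring. Qed.

Lemma close_scale A B (c : C) e : close A B e -> close (scale c A) (scale c B) ((Cmod c + 1) * e).
Proof.
  rewrite !close_iff. intros H k. rewrite !cd_scale.
  replace (c * cd k A - c * cd k B)%C with (c * (cd k A - cd k B))%C by ring.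
  rewrite Cmod_mult. specialize (H k). pose proof (Cmod_ge_0 c). pose proof (Cmod_ge_0 (cd k A - cd k B)).
  nra.
Qed.

Lemma close_trans A B D e1 e2 : close A B e1 -> close B D e2 -> close A D (e1 + e2).
Proof.
  rewrite !close_iff. intros H1 H2 k. eapply Rle_lt_trans; [apply (Cmod_tri3 _ (cd k B))|].
  specialize (H1 k); specialize (H2 k); lra.
Qed.

Lemma close_sym A B e : close A B e -> close B A e.
Proof. rewrite !close_iff. intros H k. rewrite Cmod_sub_sym. auto. Qed.

Lemma close_refl A e : 0 < e -> close A A e.
Proof. intros He. apply close_iff. intros k. replace (cd k A - cd k A)%C with (RtoC 0) by ring. rewrite Cmod_0. lra. Qed.

Lemma minor_aux (a b a' b' : C) eps : 0 < eps <= 1 -> Cmod (a - a') < eps -> Cmod (b - b') < eps ->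
  Cmod (a * b - a' * b') <= eps * (Cmod a + Cmod b + 1).
Proof.
  intros He Ha Hb.
  replace (a * b - a' * b')%C with (a * (b - b') + (a - a') * b')%C by ring.
  eapply Rle_trans; [apply Cmod_triangle|]. rewrite !Cmod_mult.
  assert (Hb' : Cmod b' <= Cmod b + 1).
  { pose proof (Cmod_sub_le b' b). rewrite Cmod_sub_sym in H. lra. }
  pose proof (Cmod_ge_0 a). pose proof (Cmod_ge_0 (a - a')). pose proof (Cmod_ge_0 (b - b')). pose proof (Cmod_ge_0 b').
  nra.
Qed.

Lemma minor_zero (a b c d : C) :
  (forall eps, 0 < eps <= 1 -> exists a' b' c' d' : C, Cmod (a - a') < eps /\ Cmod (b - b') < eps /\
     Cmod (c - c') < eps /\ Cmod (d - d') < eps /\ (a' * b' = c' * d')%C) ->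
  (a * b = c * d)%C.
Proof.
  intros H. apply NNPP; intros Hne.
  set (delta := Cmod (a * b - c * d)).
  assert (Hd : 0 < delta) by (apply Cmod_gt_0; intros E; apply Hne; 
     replace (a * b)%C with ((a * b - c * d) + c * d)%C by ring; rewrite E; ring).
  set (K := Cmod a + Cmod b + Cmod c + Cmod d + 2).
  assert (HK : 2 <= K) by (unfold K; pose proof (Cmod_ge_0 a); pose proof (Cmod_ge_0 b);
     pose proof (Cmod_ge_0 c); pose proof (Cmod_ge_0 d); lra).
  set (eps := Rmin 1 (delta / (2 * K))).
  assert (He : 0 < eps <= 1).
  { split; [apply Rmin_pos; [lra|apply Rdiv_lt_0_compat; lra]|apply Rmin_l]. }
  destruct (H eps He) as [a' [b' [c' [d' [Ha [Hb [Hc [Hdd E]]]]]]]].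
  pose proof (minor_aux a b a' b' eps He Ha Hb) as M1.
  pose proof (minor_aux c d c' d' eps He Hc Hdd) as M2.
  assert (Hdl : delta <= eps * K).
  { unfold delta. replace (a * b - c * d)%C with ((a * b - a' * b') - (c * d - c' * d'))%C
      by (rewrite E; ring).
    eapply Rle_trans; [apply (Cmod_tri3 _ 0%C)|].
    replace (a * b - a' * b' - 0)%C with (a * b - a' * b')%C by ring.
    replace (0 - (c * d - c' * d'))%C with (- (c * d - c' * d'))%C by ring. rewrite Cmod_opp.
    unfold K. lra. }
  assert (eps * K <= delta / 2).
  { apply Rle_trans with (delta / (2 * K) * K).
    - apply Rmult_le_compat_r; [lra|apply Rmin_r].
    - right. field. lra. }
  lra.
Qed.

Section S6.
Variables t1 t2 t3 t4 : C.
Notation sig := (sigma_formula t1 t2 t3).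
Notation ev := (eval_word t1 t2 t3).
Notation dfd := (defined_at t1 t2 t3).
Notation onS := (on_S t1 t2 t3 t4).
Notation Sq := (Seq t1 t2 t3 t4).
Notation gr := (graph t1 t2 t3 t4).
Notation cw := (cont_w t1 t2 t3 t4).

Lemma graph_single w Z W Y : cw w Z W -> nzv W -> gr w Z Y -> proj_eq W Y.
Proof.
  intros Hc HW [HZ [HY Hg]]. apply proj_eq_minors; auto. intros c c'.
  apply minor_zero. intros eps He.
  destruct (Hc eps (proj1 He)) as [d [Hd Hd']].
  destruct (Hg (Rmin d eps) (Rmin_pos _ _ Hd (proj1 He))) as [X' [Y' [[HS [Hdf ->]] [l [m [H1 H2]]]]]].
  destruct (Hd' X' l HS Hdf (close_mono _ _ _ _ (Rmin_l _ _) H1)) as [m' Hm'].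
  apply close_mono with (e' := eps) in H2; [|apply Rmin_r].
  rewrite close_iff in H2, Hm'.
  exists (cd c (scale m (ev w X'))), (cd c' (scale m' (ev w X'))),
         (cd c' (scale m (ev w X'))), (cd c (scale m' (ev w X'))).
  repeat split; auto. rewrite !cd_scale; ring.
Qed.

Lemma fiber_finite (P : V4 -> Prop) W : (forall Y, P Y -> proj_eq W Y) -> ~ proj_infinite P.
Proof.
  intros H Hi. destruct (Hi [W]) as [Y [HP HY]]. apply (HY W); [now left|]. auto.
Qed.

Definition approxA (Z : V4) : Prop :=
  forall e, 0 < e -> exists X', onS X' /\ X0 X' <> 0%C /\ close Z X' e.

Definition graphA (w : list idx) (X Y : V4) : Prop :=
  nzv X /\ nzv Y /\ forall e, 0 < e -> exists X', onS X' /\ X0 X' <> 0%C /\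
    exists l m : C, close X (scale l X') e /\ close Y (scale m (ev w X')) e.

Lemma approxA_affine Z : onS Z -> X0 Z <> 0%C -> approxA Z.
Proof. intros HS H0 e He. exists Z; split; [auto|split; [auto|apply close_refl; auto]]. Qed.

Lemma graphA_of_cont w Z W : cw w Z W -> nzv Z -> nzv W -> approxA Z -> graphA w Z W.
Proof.
  intros Hc HZ HW Ha. repeat split; auto. intros e He.
  destruct (Hc e He) as [d [Hd H]].
  destruct (Ha (Rmin d e) (Rmin_pos _ _ Hd He)) as [X' [HS [H0 Hcl]]].
  exists X'; repeat split; auto; try apply HS.
  destruct (H X' 1%C HS (affine_dfd t1 t2 t3 w X' H0)) as [m Hm].
  { rewrite scale1. eapply close_mono; [apply Rmin_l|eauto]. }
  exists 1%C, m; split; auto. rewrite scale1. eapply close_mono; [apply Rmin_r|eauto].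
Qed.

Lemma graphA_graph w X Y : graphA w X Y -> gr w X Y.
Proof.
  intros [HX [HY H]]. repeat split; auto. intros e He.
  destruct (H e He) as [X' [HS [H0 [l [m [H1 H2]]]]]].
  exists X', (ev w X'). split; [repeat split; auto; [apply HS|apply HS|apply affine_dfd; auto]|].
  eauto.
Qed.

Lemma graphA_compose w X Y : nzv X -> nzv Y ->
  (forall e, 0 < e -> exists X1 Y1 (l m : C), graphA w X1 Y1 /\ close X (scale l X1) e /\ close Y (scale m Y1) e) ->
  graphA w X Y.
Proof.
  intros HX HY H. repeat split; auto. intros e He.
  destruct (H (e / 2)) as [X1 [Y1 [l [m [[_ [_ Hg]] [H1 H2]]]]]]; [lra|].
  set (e' := Rmin (e / (2 * (Cmod l + 1))) (e / (2 * (Cmod m + 1)))).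
  assert (Hl := Cmod_ge_0 l). assert (Hm := Cmod_ge_0 m).
  assert (He' : 0 < e').
  { apply Rmin_pos; apply Rdiv_lt_0_compat; lra. }
  destruct (Hg e' He') as [X' [HS [H0 [l2 [m2 [H3 H4]]]]]].
  exists X'; split; auto; split; auto. exists (l * l2)%C, (m * m2)%C.
  apply (close_scale _ _ l) in H3. apply (close_scale _ _ m) in H4. rewrite scale_scale in H3, H4.
  split.
  - eapply close_mono; [|eapply close_trans; [apply H1|apply H3]].
    assert ((Cmod l + 1) * e' <= e / 2); [|lra].
    apply Rle_trans with ((Cmod l + 1) * (e / (2 * (Cmod l + 1)))).
    + apply Rmult_le_compat_l; [lra|apply Rmin_l].
    + right; field; lra.
  - eapply close_mono; [|eapply close_trans; [apply H2|apply H4]].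
    assert ((Cmod m + 1) * e' <= e / 2); [|lra].
    apply Rle_trans with ((Cmod m + 1) * (e / (2 * (Cmod m + 1)))).
    + apply Rmult_le_compat_l; [lra|apply Rmin_r].
    + right; field; lra.
Qed.

Lemma graphA_rev w X Y : graphA w X Y -> graphA (rev w) Y X.
Proof.
  intros [HX [HY H]]. repeat split; auto. intros e He.
  destruct (H e He) as [X' [HS [H0 [l [m [H1 H2]]]]]].
  exists (ev w X'). split; [apply on_S_eval; auto; apply affine_dfd; auto|].
  split; [apply affine_eval; auto|].
  destruct (eval_rev t1 t2 t3 w X' H0) as [c [Hc E]].
  exists m, (l / c)%C. split; auto. rewrite E, scale_scale.
  replace (l / c * c)%C with l by (field; auto). auto.
Qed.

Lemma graph_nzv w X Y : gr w X Y -> nzv X /\ nzv Y.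
Proof. unfold graph; tauto. Qed.

Lemma div_le1 e A : 0 <= e -> 1 <= A -> e / A <= e.
Proof.
  intros He HA. apply Rmult_le_reg_r with A; [lra|]. unfold Rdiv.
  rewrite Rmult_assoc, Rinv_l by lra. nra.
Qed.

Lemma graph_proj2 w X Y Y2 : gr w X Y -> proj_eq Y Y2 -> gr w X Y2.
Proof.
  intros [HX [HY H]] [_ [HY2 [c [Hc ->]]]]. split; [auto|split; [auto|]]. intros e He.
  assert (Hc0 := Cmod_ge_0 c).
  destruct (H (e / (Cmod c + 1))) as [X' [Y' [Hg [l [m [H1 H2]]]]]].
  { apply Rdiv_lt_0_compat; lra. }
  exists X', Y'; split; auto. exists l, (c * m)%C. split.
  - eapply close_mono; [|apply H1]. apply div_le1; lra.
  - apply (close_scale _ _ c) in H2. rewrite scale_scale in H2.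
    eapply close_mono; [|apply H2]. right; field; lra.
Qed.

Lemma graph_proj1 w X X2 Y : gr w X Y -> proj_eq X X2 -> gr w X2 Y.
Proof.
  intros [HX [HY H]] [_ [HX2 [c [Hc ->]]]]. split; [auto|split; [auto|]]. intros e He.
  assert (Hc0 := Cmod_ge_0 c).
  destruct (H (e / (Cmod c + 1))) as [X' [Y' [Hg [l [m [H1 H2]]]]]].
  { apply Rdiv_lt_0_compat; lra. }
  exists X', Y'; split; auto. exists (c * l)%C, m. split.
  - apply (close_scale _ _ c) in H1. rewrite scale_scale in H1.
    eapply close_mono; [|apply H1]. right; field; lra.
  - eapply close_mono; [|apply H2]. apply div_le1; lra.
Qed.

Lemma graph_closure1 w X Y : nzv X ->
  (forall e, 0 < e -> exists X1, gr w X1 Y /\ close X X1 e) -> gr w X Y.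
Proof.
  intros HX H. destruct (H 1) as [X1 [[_ [HY _]] _]]; [lra|].
  split; [auto|split; [auto|]]. intros e He.
  destruct (H (e / 2)) as [X1' [[_ [_ Hg]] Hcl]]; [lra|].
  destruct (Hg (e / 2)) as [X' [Y' [Hg0 [l [m [H1 H2]]]]]]; [lra|].
  exists X', Y'; split; auto. exists l, m. split.
  - eapply close_mono; [|eapply close_trans; [apply Hcl|apply H1]]. lra.
  - eapply close_mono; [|apply H2]. lra.
Qed.

Lemma closed_S X : nzv X -> (forall e, 0 < e -> exists X', Sq X' = 0%C /\ close X X' e) -> onS X.
Proof.
  intros HX H. split; auto. change (Sq X = 0%C).
  assert (Hc : cont Sq X) by (unfold Seq; solve_cont).
  apply Cmod_eq_0. apply Rle_antisym; [|apply Cmod_ge_0].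
  apply Rnot_lt_le; intros Hp.
  destruct (Hc (Cmod (Sq X)) Hp) as [d [Hd Hd']].
  destruct (H d Hd) as [X' [E Hcl]]. specialize (Hd' X' Hcl). rewrite E in Hd'.
  replace (Sq X - 0)%C with (Sq X) in Hd' by ring. lra.
Qed.

Lemma graph_onS w X Y : gr w X Y -> onS X /\ onS Y.
Proof.
  intros [HX [HY H]]. split; apply closed_S; auto; intros e He;
    destruct (H e He) as [X' [Y' [[HS [Hdf ->]] [l [m [H1 H2]]]]]].
  - exists (scale l X'); split; auto. rewrite Seq_scale. destruct HS as [_ HS].
    change (Sq X' = 0%C) in HS. rewrite HS; ring.
  - exists (scale m (ev w X')); split; auto. rewrite Seq_scale.
    destruct (on_S_eval t1 t2 t3 t4 w X' HS Hdf) as [_ HS'].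
    change (Sq (ev w X') = 0%C) in HS'. rewrite HS'; ring.
Qed.

End S6.


Lemma Csqrt_ex (w : C) : exists r : C, (r * r = w)%C.
Proof.
  destruct w as [p q].
  set (rho := sqrt (p * p + q * q)).
  assert (Hr2 : rho * rho = p * p + q * q) by (apply sqrt_sqrt; nra).
  assert (Hr0 : 0 <= rho) by apply sqrt_pos.
  assert (Hrp : Rabs p <= rho).
  { rewrite <- sqrt_Rsqr_abs. apply sqrt_le_1_alt. unfold Rsqr; nra. }
  assert (H1 : 0 <= (rho + p) / 2) by (pose proof (Rle_abs (-p)); rewrite Rabs_Ropp in H; lra).
  assert (H2 : 0 <= (rho - p) / 2) by (pose proof (Rle_abs p); lra).
  set (re := sqrt ((rho + p) / 2)). set (im := sqrt ((rho - p) / 2)).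
  assert (Hre : re * re = (rho + p) / 2) by (apply sqrt_sqrt; auto).
  assert (Him : im * im = (rho - p) / 2) by (apply sqrt_sqrt; auto).
  assert (Hri : re * im = Rabs q / 2).
  { unfold re, im. rewrite <- sqrt_mult by auto.
    replace ((rho + p) / 2 * ((rho - p) / 2)) with (Rsqr (Rabs q / 2)).
    - apply sqrt_Rsqr. pose proof (Rabs_pos q); lra.
    - unfold Rsqr. replace (Rabs q / 2 * (Rabs q / 2)) with ((Rabs q * Rabs q) / 4) by field.
      rewrite <- Rabs_mult, Rabs_right by nra. nra. }
  destruct (Rle_dec 0 q) as [Hq|Hq].
  - exists (re, im). unfold Cmult; simpl. f_equal.
    + lra.
    + rewrite Rabs_right in Hri by lra. nra.
  - exists (re, - im). unfold Cmult; simpl. f_equal.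
    + nra.
    + rewrite Rabs_left in Hri by lra. nra.
Qed.

Lemma Cmod_sq (x : C) : Cmod x * Cmod x = fst x * fst x + snd x * snd x.
Proof.
  unfold Cmod. rewrite sqrt_sqrt; [simpl; ring|]. simpl. nra.
Qed.

Lemma small_root (al be ga : C) : be <> 0%C ->
  exists s : C, (al * s * s + be * s + ga = 0)%C /\ Cmod s <= 2 * Cmod ga / Cmod be.
Proof.
  intros Hb. destruct (Csqrt_ex (be * be - 4 * al * ga)%C) as [r Hr].
  assert (Hpar : Cmod (be + r) * Cmod (be + r) + Cmod (be - r) * Cmod (be - r) =
                 2 * (Cmod be * Cmod be) + 2 * (Cmod r * Cmod r)).
  { rewrite !Cmod_sq. destruct be as [b1 b2], r as [r1 r2]. simpl. ring. }
  assert (Hbpos : 0 < Cmod be) by now apply Cmod_gt_0.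
  assert (exists r' : C, (r' * r' = be * be - 4 * al * ga)%C /\ Cmod be <= Cmod (be + r')) as [r' [Hr' Hge]].
  { destruct (Rle_dec (Cmod be) (Cmod (be + r))) as [H|H].
    - exists r; auto.
    - exists (- r)%C. split; [rewrite <- Hr; ring|].
      replace (be + - r)%C with (be - r)%C by ring.
      pose proof (Cmod_ge_0 (be - r)). pose proof (Cmod_ge_0 (be + r)). pose proof (Cmod_ge_0 r).
      nra. }
  assert (HD : (be + r')%C <> 0%C) by (intros E; rewrite E, Cmod_0 in Hge; lra).
  remember (be + r')%C as D eqn:HDdef.
  exists (- (2) * ga / D)%C. split.
  - assert (E : ((al * (- (2) * ga / D) * (- (2) * ga / D) + be * (- (2) * ga / D) + ga) * (D * D)
                = ga * (4 * al * ga - 2 * be * D + D * D))%C).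
    { field. exact HD. }
    assert (E2 : (4 * al * ga - 2 * be * D + D * D = 0)%C).
    { rewrite HDdef. transitivity (4 * al * ga - be * be + r' * r')%C; [ring|]. rewrite Hr'. ring. }
    rewrite E2, Cmult_0_r in E. apply Cmult_eq0 in E as [E|E]; auto.
    exfalso. apply Cmult_eq0 in E as [E|E]; auto.
  - rewrite Cmod_div by auto. rewrite Cmod_mult.
    replace (Cmod (- (2))) with 2.
    2:{ replace (- (2))%C with (RtoC (-2)) by (unfold RtoC, Copp; simpl; f_equal; ring).
        rewrite Cmod_R, Rabs_left; lra. }
    unfold Rdiv. apply Rmult_le_compat_l.
    + pose proof (Cmod_ge_0 ga); lra.
    + apply Rinv_le_contravar; auto.
Qed.

Lemma Cmod_0mR (r : R) : Cmod (0 - RtoC r) = Rabs r.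
Proof. replace (0 - RtoC r)%C with (RtoC (- r)) by (unfold RtoC, Cminus, Cplus, Copp; simpl; f_equal; ring).
  rewrite Cmod_R, Rabs_Ropp; auto. Qed.
Lemma Cmod_0m (s : C) : Cmod (0 - s) = Cmod s.
Proof. replace (0 - s)%C with (- s)%C by ring. apply Cmod_opp. Qed.
Lemma Cmod_mm (u : C) : Cmod (u - u) = 0.
Proof. replace (u - u)%C with (RtoC 0) by ring. apply Cmod_0. Qed.

Ltac close_tac := apply close_iff; intros c; destruct c; simpl;
  rewrite ?Cmod_0mR, ?Cmod_0m, ?Cmod_mm; try (rewrite Rabs_right; lra); lra.

Section S7.
Variables t1 t2 t3 t4 : C.
Notation sig := (sigma_formula t1 t2 t3).
Notation ev := (eval_word t1 t2 t3).
Notation dfd := (defined_at t1 t2 t3).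
Notation onS := (on_S t1 t2 t3 t4).
Notation Sq := (Seq t1 t2 t3 t4).
Notation gr := (graph t1 t2 t3 t4).
Notation cw := (cont_w t1 t2 t3 t4).
Notation apA := (approxA t1 t2 t3 t4).

Lemma approx_core (b g : V4 -> C) Z (mk : R -> C -> V4) :
  cont b Z -> cont g Z -> b Z <> 0%C -> g Z = 0%C ->
  (forall (r : R) (s : C) d, 0 < r < d -> Cmod s < d -> close Z (mk r s) d) ->
  (forall r s, Sq (mk r s) = (RtoC r * s * s + b (mk r 0%C) * s + g (mk r 0%C))%C) ->
  (forall r s, X0 (mk r s) = RtoC r) ->
  apA Z.
Proof.
  intros Hb Hg HbZ HgZ Hcl HSq H0 e He.
  set (B := Cmod (b Z)). assert (HB : 0 < B) by now apply Cmod_gt_0.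
  destruct (Hb (B / 2)) as [d1 [Hd1 H1]]; [lra|].
  destruct (Hg (e * B / 8)) as [d2 [Hd2 H2]]; [nra|].
  set (r := Rmin (Rmin d1 d2) e / 2).
  assert (Hm := Rmin_l (Rmin d1 d2) e). assert (Hm2 := Rmin_r (Rmin d1 d2) e).
  assert (Hm3 := Rmin_l d1 d2). assert (Hm4 := Rmin_r d1 d2).
  assert (Hmp : 0 < Rmin (Rmin d1 d2) e) by (repeat apply Rmin_pos; auto).
  assert (Hr : 0 < r) by (unfold r; lra).
  set (X := mk r 0%C).
  assert (HX1 : close Z X d1) by (apply Hcl; [unfold r; lra|rewrite Cmod_0; lra]).
  assert (HX2 : close Z X d2) by (apply Hcl; [unfold r; lra|rewrite Cmod_0; lra]).
  specialize (H1 X HX1). specialize (H2 X HX2). rewrite HgZ, Cmod_0m in H2.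
  assert (HbX : B / 2 < Cmod (b X)).
  { pose proof (Cmod_sub_le (b Z) (b X)). fold B in H. lra. }
  assert (HbX0 : b X <> 0%C) by (apply Cmod_gt_0; lra).
  destruct (small_root (RtoC r) (b X) (g X) HbX0) as [s [Hs Hsb]].
  assert (Hse : Cmod s < e).
  { eapply Rle_lt_trans; [apply Hsb|]. apply (Rmult_lt_reg_r (Cmod (b X))); [lra|].
    unfold Rdiv. rewrite Rmult_assoc, Rinv_l by lra. nra. }
  exists (mk r s). split; [split|split].
  - apply nzv_of_X0. rewrite H0. apply RtoC_neq0; lra.
  - change (Sq (mk r s) = 0%C). rewrite HSq. exact Hs.
  - rewrite H0. apply RtoC_neq0; lra.
  - apply Hcl; auto. unfold r; lra.
Qed.

Lemma approx_interior k Z : onS Z -> interior k Z -> apA Z.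
Proof.
  intros HS [H0 [Hk Hj]]. destruct Z as [a x y z]; simpl in *; subst a.
  destruct k; simpl in Hk; subst.
  - assert (Hy : y <> 0%C) by (apply (Hj I2); discriminate).
    assert (Hz : z <> 0%C) by (apply (Hj I3); discriminate).
    apply (approx_core (fun X => X2 X * X3 X - X0 X * X0 X * t1)%C
             (fun X => X0 X * (X2 X * X2 X + X3 X * X3 X) - X0 X * X0 X * (t2 * X2 X + t3 * X3 X)
                        + t4 * (X0 X * X0 X * X0 X))%C _ (fun r s => mkV4 (RtoC r) s y z)).
    + solve_cont.
    + solve_cont.
    + simpl. replace (y * z - 0 * 0 * t1)%C with (y * z)%C by ring. now apply Cmult_neq0.
    + simpl; ring.
    + intros r s d Hr Hs. close_tac.
    + intros r s. unfold Seq; simpl; ring.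
    + reflexivity.
  - assert (Hx : x <> 0%C) by (apply (Hj I1); discriminate).
    assert (Hz : z <> 0%C) by (apply (Hj I3); discriminate).
    apply (approx_core (fun X => X1 X * X3 X - X0 X * X0 X * t2)%C
             (fun X => X0 X * (X1 X * X1 X + X3 X * X3 X) - X0 X * X0 X * (t1 * X1 X + t3 * X3 X)
                        + t4 * (X0 X * X0 X * X0 X))%C _ (fun r s => mkV4 (RtoC r) x s z)).
    + solve_cont.
    + solve_cont.
    + simpl. replace (x * z - 0 * 0 * t2)%C with (x * z)%C by ring. now apply Cmult_neq0.
    + simpl; ring.
    + intros r s d Hr Hs. close_tac.
    + intros r s. unfold Seq; simpl; ring.
    + reflexivity.
  - assert (Hx : x <> 0%C) by (apply (Hj I1); discriminate).
    assert (Hy : y <> 0%C) by (apply (Hj I2); discriminate).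
    apply (approx_core (fun X => X1 X * X2 X - X0 X * X0 X * t3)%C
             (fun X => X0 X * (X1 X * X1 X + X2 X * X2 X) - X0 X * X0 X * (t1 * X1 X + t2 * X2 X)
                        + t4 * (X0 X * X0 X * X0 X))%C _ (fun r s => mkV4 (RtoC r) x y s)).
    + solve_cont.
    + solve_cont.
    + simpl. replace (x * y - 0 * 0 * t3)%C with (x * y)%C by ring. now apply Cmult_neq0.
    + simpl; ring.
    + intros r s d Hr Hs. close_tac.
    + intros r s. unfold Seq; simpl; ring.
    + reflexivity.
Qed.

End S7.


Lemma nograph_core (u a y z m s0 s1 s2 s3 Fv g1 g2 g3 : C) :
  1/2 < Cmod u -> (u * s0 = a * (a * u))%C -> (u * s1 = a * Fv)%C ->
  (u * s2 = a * (u * y))%C -> (u * s3 = a * (u * z))%C ->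
  Fv = (y * g1 + z * g2 + a * g3)%C -> Cmod g1 < 1 -> Cmod g2 < 1 -> Cmod g3 < 1 ->
  Cmod (0 - m * s0) < 1/8 -> Cmod (1 - m * s1) < 1/8 -> Cmod (0 - m * s2) < 1/8 ->
  Cmod (0 - m * s3) < 1/8 -> False.
Proof.
  intros Hu E0 E1 E2 E3 EF G1 G2 G3 C0 C1 C2 C3.
  assert (Hu0 : u <> 0%C) by (intros E; rewrite E, Cmod_0 in Hu; lra).
  rewrite Cmod_0m in C0, C2, C3.
  set (mu := (m * a / u)%C).
  assert (M0 : (m * s0 = (mu * a) * u)%C).
  { assert (s0 = a * (a * u) / u)%C as -> by (rewrite <- E0; field; auto). unfold mu; field; auto. }
  assert (M1 : (m * s1 = mu * Fv)%C).
  { assert (s1 = a * Fv / u)%C as -> by (rewrite <- E1; field; auto). unfold mu; field; auto. }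
  assert (M2 : (m * s2 = (mu * y) * u)%C).
  { assert (s2 = a * (u * y) / u)%C as -> by (rewrite <- E2; field; auto). unfold mu; field; auto. }
  assert (M3 : (m * s3 = (mu * z) * u)%C).
  { assert (s3 = a * (u * z) / u)%C as -> by (rewrite <- E3; field; auto). unfold mu; field; auto. }
  rewrite M0, Cmod_mult in C0. rewrite M2, Cmod_mult in C2. rewrite M3, Cmod_mult in C3.
  assert (Ba : Cmod (mu * a) < 1/4) by (pose proof (Cmod_ge_0 (mu * a)); nra).
  assert (By : Cmod (mu * y) < 1/4) by (pose proof (Cmod_ge_0 (mu * y)); nra).
  assert (Bz : Cmod (mu * z) < 1/4) by (pose proof (Cmod_ge_0 (mu * z)); nra).
  assert (HF : Cmod (m * s1) < 3/4).
  { rewrite M1, EF. replace (mu * (y * g1 + z * g2 + a * g3))%C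
      with ((mu * y) * g1 + (mu * z) * g2 + (mu * a) * g3)%C by ring.
    eapply Rle_lt_trans; [apply Cmod_triangle|].
    pose proof (Cmod_triangle ((mu * y) * g1) ((mu * z) * g2)).
    rewrite !Cmod_mult in *.
    pose proof (Cmod_ge_0 (mu * y)). pose proof (Cmod_ge_0 (mu * z)). pose proof (Cmod_ge_0 (mu * a)).
    pose proof (Cmod_ge_0 g1). pose proof (Cmod_ge_0 g2). pose proof (Cmod_ge_0 g3).
    nra. }
  pose proof (Cmod_sub_le 1%C (m * s1)%C). rewrite Cmod_1 in H. lra.
Qed.

Section S8.
Variables t1 t2 t3 t4 : C.
Notation sig := (sigma_formula t1 t2 t3).
Notation ev := (eval_word t1 t2 t3).
Notation dfd := (defined_at t1 t2 t3).
Notation onS := (on_S t1 t2 t3 t4).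
Notation Sq := (Seq t1 t2 t3 t4).
Notation gr := (graph t1 t2 t3 t4).
Notation cw := (cont_w t1 t2 t3 t4).
Notation apA := (approxA t1 t2 t3 t4).
Notation grA := (graphA t1 t2 t3).

Lemma cont_at_zero f P : cont f P -> f P = 0%C ->
  exists d, 0 < d /\ forall X, close P X d -> Cmod (f X) < 1.
Proof.
  intros Hf H. destruct (Hf 1) as [d [Hd H']]; [lra|]. exists d; split; auto.
  intros X HX. specialize (H' X HX). rewrite H, Cmod_0m in H'. auto.
Qed.

Lemma nograph i : ~ gr [i] (pt i) (pt i).
Proof.
  intros [_ [_ H]].
  set (own := cd (ci i)).
  set (f1 := fun X : V4 => match i with I1 => X2 X - X0 X * t2 | I2 => X1 X - X0 X * t1 | I3 => X1 X - X0 X * t1 end%C).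
  set (f2 := fun X : V4 => match i with I1 => X3 X - X0 X * t3 | I2 => X3 X - X0 X * t3 | I3 => X2 X - X0 X * t2 end%C).
  set (f3 := fun X : V4 => (t4 * X0 X)%C).
  destruct (cont_at_zero f1 (pt i)) as [d1 [Hd1 H1]]; [destruct i; unfold f1; solve_cont|destruct i; unfold f1; simpl; ring|].
  destruct (cont_at_zero f2 (pt i)) as [d2 [Hd2 H2]]; [destruct i; unfold f2; solve_cont|destruct i; unfold f2; simpl; ring|].
  destruct (cont_at_zero f3 (pt i)) as [d3 [Hd3 H3]]; [unfold f3; solve_cont|destruct i; unfold f3; simpl; ring|].
  set (d := Rmin (Rmin d1 d2) (Rmin d3 (1/8))).
  assert (Hd : 0 < d) by (unfold d; repeat apply Rmin_pos; lra).
  destruct (H d Hd) as [X' [Y' [[HS [Hdf ->]] [l [m' [HX HY]]]]]].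
  assert (Hm1 := Rmin_l (Rmin d1 d2) (Rmin d3 (1/8))). assert (Hm2 := Rmin_r (Rmin d1 d2) (Rmin d3 (1/8))).
  assert (Hm3 := Rmin_l d1 d2). assert (Hm4 := Rmin_r d1 d2).
  assert (Hm5 := Rmin_l d3 (1/8)). assert (Hm6 := Rmin_r d3 (1/8)).
  fold d in Hm1, Hm2.
  set (Z := scale l X') in *.
  assert (G1 : Cmod (f1 Z) < 1) by (apply H1; eapply close_mono; [|apply HX]; lra).
  assert (G2 : Cmod (f2 Z) < 1) by (apply H2; eapply close_mono; [|apply HX]; lra).
  assert (G3 : Cmod (f3 Z) < 1) by (apply H3; eapply close_mono; [|apply HX]; lra).
  assert (HX8 : close (pt i) Z (1/8)) by (eapply close_mono; [|apply HX]; lra).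
  assert (HY8 : close (pt i) (scale m' (ev [i] X')) (1/8)) by (eapply close_mono; [|apply HY]; lra).
  rewrite close_iff in HX8, HY8.
  assert (Hu : 1/2 < Cmod (cd (ci i) Z)).
  { specialize (HX8 (ci i)). pose proof (Cmod_sub_le 1%C (cd (ci i) Z)).
    rewrite Cmod_1 in H0. replace (cd (ci i) (pt i)) with (RtoC 1) in HX8 by (destruct i; reflexivity). lra. }
  assert (Hl : l <> 0%C).
  { intros E. unfold Z in Hu. rewrite cd_scale, E, Cmult_0_l, Cmod_0 in Hu. lra. }
  assert (HZS : Sq Z = 0%C).
  { unfold Z. rewrite Seq_scale. destruct HS as [_ HS]. change (Sq X' = 0%C) in HS. rewrite HS; ring. }
  assert (Hsig : sig i Z = scale (l * l) (sig i X')) by (unfold Z; apply sig_scale).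
  assert (Em : forall c, (m' * cd c (sig i X') = (m' / (l * l)) * cd c (sig i Z))%C).
  { intros c. rewrite Hsig, cd_scale. field. auto. }
  simpl in HY8.
  destruct i.
  - pose proof (id1a t1 t2 t3 t4 Z HZS) as Id.
    apply (nograph_core (X1 Z) (X0 Z) (X2 Z) (X3 Z) (m' / (l * l))
             (cd K0 (sig I1 Z)) (cd K1 (sig I1 Z)) (cd K2 (sig I1 Z)) (cd K3 (sig I1 Z))
             (cd K1 (F1 t2 t3 t4 Z)) (f1 Z) (f2 Z) (f3 Z)).
    + exact Hu.
    + rewrite (Id K0); simpl; ring.
    + apply Id.
    + rewrite (Id K2); simpl; ring.
    + rewrite (Id K3); simpl; ring.
    + unfold f1, f2, f3; simpl; ring.
    + exact G1.
    + exact G2.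
    + exact G3.
    + rewrite <- Em. apply (HY8 K0).
    + rewrite <- Em. apply (HY8 K1).
    + rewrite <- Em. apply (HY8 K2).
    + rewrite <- Em. apply (HY8 K3).
  - pose proof (id2a t1 t2 t3 t4 Z HZS) as Id.
    apply (nograph_core (X2 Z) (X0 Z) (X1 Z) (X3 Z) (m' / (l * l))
             (cd K0 (sig I2 Z)) (cd K2 (sig I2 Z)) (cd K1 (sig I2 Z)) (cd K3 (sig I2 Z))
             (cd K2 (F2 t1 t3 t4 Z)) (f1 Z) (f2 Z) (f3 Z)).
    + exact Hu.
    + rewrite (Id K0); simpl; ring.
    + apply Id.
    + rewrite (Id K1); simpl; ring.
    + rewrite (Id K3); simpl; ring.
    + unfold f1, f2, f3; simpl; ring.
    + exact G1.
    + exact G2.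
    + exact G3.
    + rewrite <- Em. apply (HY8 K0).
    + rewrite <- Em. apply (HY8 K2).
    + rewrite <- Em. apply (HY8 K1).
    + rewrite <- Em. apply (HY8 K3).
  - pose proof (id3a t1 t2 t3 t4 Z HZS) as Id.
    apply (nograph_core (X3 Z) (X0 Z) (X1 Z) (X2 Z) (m' / (l * l))
             (cd K0 (sig I3 Z)) (cd K3 (sig I3 Z)) (cd K1 (sig I3 Z)) (cd K2 (sig I3 Z))
             (cd K3 (F3 t1 t2 t4 Z)) (f1 Z) (f2 Z) (f3 Z)).
    + exact Hu.
    + rewrite (Id K0); simpl; ring.
    + apply Id.
    + rewrite (Id K1); simpl; ring.
    + rewrite (Id K2); simpl; ring.
    + unfold f1, f2, f3; simpl; ring.
    + exact G1.
    + exact G2.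
    + exact G3.
    + rewrite <- Em. apply (HY8 K0).
    + rewrite <- Em. apply (HY8 K3).
    + rewrite <- Em. apply (HY8 K1).
    + rewrite <- Em. apply (HY8 K2).
Qed.

End S8.


Definition ip (i : idx) (t : R) : V4 :=
  match i with
  | I1 => mkV4 0 0 1 (RtoC t) | I2 => mkV4 0 1 0 (RtoC t) | I3 => mkV4 0 1 (RtoC t) 0
  end.
Definition ratio (i : idx) (Z : V4) : C :=
  match i with I1 => (X3 Z / X2 Z)%C | I2 => (X3 Z / X1 Z)%C | I3 => (X2 Z / X1 Z)%C end.

Lemma ip_ratio i t Z : proj_eq Z (ip i t) -> ratio i Z = RtoC t.
Proof.
  intros [_ [_ [c [Hc E]]]].
  pose proof (f_equal X1 E) as E1. pose proof (f_equal X2 E) as E2. pose proof (f_equal X3 E) as E3.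
  destruct i; simpl in E1, E2, E3 |- *.
  - assert (H2 : X2 Z <> 0%C) by (intros H; rewrite H, Cmult_0_r in E2; apply (RtoC_neq0 1); [lra|auto]).
    transitivity ((c * X3 Z) / (c * X2 Z))%C; [field; split; auto | rewrite <- E2, <- E3; field].
  - assert (H2 : X1 Z <> 0%C) by (intros H; rewrite H, Cmult_0_r in E1; apply (RtoC_neq0 1); [lra|auto]).
    transitivity ((c * X3 Z) / (c * X1 Z))%C; [field; split; auto | rewrite <- E1, <- E3; field].
  - assert (H2 : X1 Z <> 0%C) by (intros H; rewrite H, Cmult_0_r in E1; apply (RtoC_neq0 1); [lra|auto]).
    transitivity ((c * X2 Z) / (c * X1 Z))%C; [field; split; auto | rewrite <- E1, <- E2; field].
Qed.

Definition rsum (i : idx) (l : list V4) : R := fold_right (fun Z acc => Cmod (ratio i Z) + acc) 0 l.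

Lemma rsum_pos i l : 0 <= rsum i l.
Proof. induction l; simpl; [lra|]. pose proof (Cmod_ge_0 (ratio i a)); lra. Qed.

Lemma rsum_ge i l Z : In Z l -> Cmod (ratio i Z) <= rsum i l.
Proof.
  induction l as [|a l IH]; simpl; [tauto|]. intros [->|H].
  - pose proof (rsum_pos i l); lra.
  - specialize (IH H). pose proof (Cmod_ge_0 (ratio i a)); lra.
Qed.

Lemma infinite_ip i (P : V4 -> Prop) : (forall t, 0 < t -> P (ip i t)) -> proj_infinite P.
Proof.
  intros HP l. set (t := 1 + rsum i l). assert (Ht : 0 < t) by (unfold t; pose proof (rsum_pos i l); lra).
  exists (ip i t). split; [apply HP; auto|]. intros Z HZ Hp. apply ip_ratio in Hp.
  pose proof (rsum_ge i l Z HZ) as H. rewrite Hp, Cmod_R, Rabs_right in H by lra. unfold t in H; lra.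
Qed.

Lemma ip_interior i t : t <> 0 -> interior i (ip i t).
Proof.
  intros Ht. assert (H1 : RtoC 1 <> 0%C) by (apply RtoC_neq0; lra).
  assert (H2 : RtoC t <> 0%C) by (apply RtoC_neq0; lra).
  destruct i; repeat split; simpl; auto; intros j Hj; destruct j; simpl; auto; congruence.
Qed.

Lemma pick_nz (y : C) e : 0 < e -> exists y' : C, y' <> 0%C /\ Cmod (y - y') < e.
Proof.
  intros He. destruct (classic (y = 0%C)) as [->|Hy].
  - exists (RtoC (e / 2)). split; [apply RtoC_neq0; lra|]. rewrite Cmod_0mR, Rabs_right; lra.
  - exists y. split; auto. rewrite Cmod_mm; lra.
Qed.

Section S9.
Variables t1 t2 t3 t4 : C.
Notation sig := (sigma_formula t1 t2 t3).
Notation ev := (eval_word t1 t2 t3).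
Notation dfd := (defined_at t1 t2 t3).
Notation onS := (on_S t1 t2 t3 t4).
Notation Sq := (Seq t1 t2 t3 t4).
Notation gr := (graph t1 t2 t3 t4).
Notation cw := (cont_w t1 t2 t3 t4).
Notation apA := (approxA t1 t2 t3 t4).
Notation grA := (graphA t1 t2 t3 t4).

Lemma interior_onS i Z : nzv Z -> interior i Z -> onS Z.
Proof.
  intros Hn [H0 [Hi _]]. split; auto. change (Sq Z = 0%C).
  destruct Z as [a x y z]; simpl in *; subst a. destruct i; simpl in Hi; subst; unfold Seq; simpl; ring.
Qed.

Lemma interior_nzv i Z : interior i Z -> nzv Z.
Proof.
  intros [_ [_ Hj]]. apply nzv_iff.
  destruct i; [exists K2; apply (Hj I2)|exists K1; apply (Hj I1)|exists K1; apply (Hj I1)]; discriminate.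
Qed.

Lemma ip_onS i t : t <> 0 -> onS (ip i t).
Proof. intros Ht. apply (interior_onS i); [eapply interior_nzv|]; apply ip_interior; auto. Qed.

Lemma interior_dense i X : on_L i X -> forall e, 0 < e ->
  exists Z, interior i Z /\ close X Z e.
Proof.
  intros [Hn [H0 Hi]] e He. destruct X as [a x y z]; simpl in *; subst a.
  destruct i; simpl in Hi; subst.
  - destruct (pick_nz y e He) as [y' [Hy Hy']]. destruct (pick_nz z e He) as [z' [Hz Hz']].
    exists (mkV4 0 0 y' z'). split.
    + repeat split; simpl; auto. intros j Hj; destruct j; simpl; congruence.
    + apply close_iff; intros c; destruct c; simpl; rewrite ?Cmod_mm; auto; lra.
  - destruct (pick_nz x e He) as [y' [Hy Hy']]. destruct (pick_nz z e He) as [z' [Hz Hz']].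
    exists (mkV4 0 y' 0 z'). split.
    + repeat split; simpl; auto. intros j Hj; destruct j; simpl; congruence.
    + apply close_iff; intros c; destruct c; simpl; rewrite ?Cmod_mm; auto; lra.
  - destruct (pick_nz x e He) as [y' [Hy Hy']]. destruct (pick_nz y e He) as [z' [Hz Hz']].
    exists (mkV4 0 y' z' 0). split.
    + repeat split; simpl; auto. intros j Hj; destruct j; simpl; congruence.
    + apply close_iff; intros c; destruct c; simpl; rewrite ?Cmod_mm; auto; lra.
Qed.

Lemma inf_interior i X : onS X -> X0 X = 0%C -> nzv (sig i X) -> interior i X.
Proof.
  intros [Hn HS] H0 Hs. change (Sq X = 0%C) in HS.
  destruct X as [a x y z]; simpl in *; subst a.
  apply nzv_iff in Hs as [c Hc].
  destruct i, c; simpl in Hc; try (exfalso; apply Hc; ring).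
  - assert (Hyz : (y * z <> 0)%C) by (intros E; apply Hc; transitivity (- (y * z))%C; [ring | rewrite E; ring]).
    assert (Hy : y <> 0%C) by (intros E; apply Hyz; rewrite E; ring).
    assert (Hz : z <> 0%C) by (intros E; apply Hyz; rewrite E; ring).
    assert (Hx : x = 0%C).
    { assert (E : (x * (y * z) = 0)%C) by (rewrite <- HS; unfold Seq; simpl; ring).
      destruct (Cmult_eq0 _ _ E); auto; contradiction. }
    repeat split; simpl; auto. intros j Hj; destruct j; simpl; congruence.
  - assert (Hyz : (x * z <> 0)%C) by (intros E; apply Hc; transitivity (- (x * z))%C; [ring | rewrite E; ring]).
    assert (Hy : x <> 0%C) by (intros E; apply Hyz; rewrite E; ring).
    assert (Hz : z <> 0%C) by (intros E; apply Hyz; rewrite E; ring).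
    assert (Hx : y = 0%C).
    { assert (E : (y * (x * z) = 0)%C) by (rewrite <- HS; unfold Seq; simpl; ring).
      destruct (Cmult_eq0 _ _ E); auto; contradiction. }
    repeat split; simpl; auto. intros j Hj; destruct j; simpl; congruence.
  - assert (Hyz : (x * y <> 0)%C) by (intros E; apply Hc; transitivity (- (x * y))%C; [ring | rewrite E; ring]).
    assert (Hy : x <> 0%C) by (intros E; apply Hyz; rewrite E; ring).
    assert (Hz : y <> 0%C) by (intros E; apply Hyz; rewrite E; ring).
    assert (Hx : z = 0%C).
    { assert (E : (z * (x * y) = 0)%C) by (rewrite <- HS; unfold Seq; simpl; ring).
      destruct (Cmult_eq0 _ _ E); auto; contradiction. }
    repeat split; simpl; auto. intros j Hj; destruct j; simpl; congruence.
Qed.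

Lemma graph_graphA i w X Y : gr (i :: w) X Y -> grA (i :: w) X Y.
Proof.
  intros Hg. destruct (graph_nzv t1 t2 t3 t4 _ _ _ Hg) as [HX HY].
  apply graphA_compose; auto. intros e He. destruct Hg as [_ [_ H]].
  destruct (H e He) as [X' [Y' [[HS [Hdf ->]] [l [m [H1 H2]]]]]].
  exists X', (ev (i :: w) X'), l, m. split; auto.
  destruct (classic (X0 X' = 0%C)) as [H0|H0].
  - destruct w as [|j w'].
    + destruct Hdf as [_ Hs]. simpl in Hs |- *.
      pose proof (inf_interior i X' HS H0 Hs) as Hint.
      destruct (sig_nzv_case t1 t2 t3 t4 i X' HS Hs) as [_ [Hc _]].
      apply (graphA_of_cont t1 t2 t3 t4 [i]); auto.
      * apply cont_w_cons with X'; auto. apply cont_w_nil.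
      * apply HS.
      * apply (approx_interior t1 t2 t3 t4 i); auto.
    + exfalso. apply (dfd_inf_short t1 t2 t3 i j w' X' H0 Hdf).
  - split; [apply HS|split; [apply dfd_nz; auto|]]. intros e' He'.
    exists X'. split; auto. split; auto. exists 1%C, 1%C. rewrite !scale1. split; apply close_refl; auto.
Qed.

End S9.

Lemma nr_tail (a : idx) l : no_repeat (a :: l) -> no_repeat l.
Proof. destruct l; simpl; tauto. Qed.

Lemma nr_snoc l (a : idx) : no_repeat l -> (l = [] \/ last l a <> a) -> no_repeat (l ++ [a]).
Proof.
  induction l as [|x l IH]; intros Hn Hl; simpl; auto.
  destruct l as [|y l'].
  - simpl. destruct Hl as [H|H]; [discriminate|]. simpl in H. split; auto.
  - destruct Hn as [Hxy Hn]. simpl. split; auto. apply IH; auto.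
    destruct Hl as [H|H]; [discriminate|]. right. simpl in H |- *. auto.
Qed.

Lemma nr_rev l : no_repeat l -> no_repeat (rev l).
Proof.
  induction l as [|x l IH]; intros H; simpl; auto.
  apply nr_snoc; [apply IH; eapply nr_tail; eauto|].
  destruct l as [|y l']; [left; reflexivity|]. right. simpl. rewrite last_last.
  destruct H as [Hxy _]. congruence.
Qed.

Lemma rev_cons_last (i1 : idx) w : exists rest, rev (i1 :: w) = last (i1 :: w) i1 :: rest.
Proof.
  assert (Hne : i1 :: w <> []) by discriminate.
  pose proof (app_removelast_last i1 Hne) as E.
  exists (rev (removelast (i1 :: w))). rewrite E at 1. rewrite rev_app_distr. reflexivity.
Qed.

Lemma last_rev_cons (i1 : idx) w d : last (rev (i1 :: w)) d = i1.
Proof. simpl. apply last_last. Qed.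

Lemma exists_other (i1 k : idx) w : no_repeat (i1 :: k :: w) ->
  exists j, In j (i1 :: k :: w) /\ j <> last (i1 :: k :: w) i1.
Proof.
  intros [Hk _]. destruct (classic (i1 = last (i1 :: k :: w) i1)) as [E|E].
  - exists k. split; [simpl; auto|]. congruence.
  - exists i1. split; [simpl; auto|]. auto.
Qed.


Theorem lemma7p2 (t1 t2 t3 t4 : C) (i1 : idx) (w : list idx)
  (Hw : no_repeat (i1 :: w)) :
  (forall X : V4, nzv X ->
     (exc t1 t2 t3 t4 (i1 :: w) X <->
      exists i, In i (i1 :: w) /\ on_L i X)) /\
  (forall Y : V4, nzv Y ->
     (sigma_image t1 t2 t3 t4 (i1 :: w) (exc t1 t2 t3 t4 (i1 :: w)) Y <->
      proj_eq (pt i1) Y)) /\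
  (forall X : V4, nzv X ->
     (indet t1 t2 t3 t4 (i1 :: w) X <->
      proj_eq (pt (last (i1 :: w) i1)) X)).
Proof.
  set (lst := last (i1 :: w) i1).
  destruct (rev_cons_last i1 w) as [rest Erw]. fold lst in Erw.
  assert (Hnr_rw : no_repeat (lst :: rest)) by (rewrite <- Erw; apply nr_rev; auto).
  assert (Hlast_rw : last (lst :: rest) lst = i1) by (rewrite <- Erw; apply last_rev_cons).
  assert (Hrev_rw : rev (lst :: rest) = i1 :: w) by (rewrite <- Erw; apply rev_involutive).
  set (gr := graph t1 t2 t3 t4).
  assert (Sym : forall X Y, gr (i1 :: w) X Y -> gr (lst :: rest) Y X).
  { intros X Y H. rewrite <- Erw. apply graphA_graph. apply graphA_rev. apply graph_graphA; auto. }
  assert (Sym' : forall X Y, gr (lst :: rest) X Y -> gr (i1 :: w) Y X).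
  { intros X Y H. rewrite <- Hrev_rw. apply graphA_graph. apply graphA_rev. apply graph_graphA; auto. }
  assert (G : forall i X, In i (i1 :: w) -> on_L i X -> gr (i1 :: w) X (pt i1)).
  { intros i X Hi HL. apply graph_closure1; [apply HL|]. intros e He.
    destruct (interior_dense i X HL e He) as [Z [HZi HZc]]. exists Z; split; auto.
    assert (HZn : nzv Z) by (eapply interior_nzv; eauto).
    assert (HZS : on_S t1 t2 t3 t4 Z) by (eapply interior_onS; eauto).
    assert (Hp : ~ proj_eq (pt lst) Z) by (eapply interior_notpt; eauto).
    destruct (main_inv t1 t2 t3 t4 w i1 Hw Z HZS Hp) as [W [Hc [HWS [_ [Hb _]]]]].
    assert (HW : proj_eq (pt i1) W) by (apply (Hb i); auto; apply interior_L; auto).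
    apply graph_proj2 with W; [|apply proj_eq_sym; auto].
    apply graphA_graph. apply graphA_of_cont; auto; [apply HWS|]. eapply approx_interior; eauto. }
  assert (Gint : forall t X, 0 < t -> proj_eq (pt lst) X -> gr (i1 :: w) X (ip lst t)).
  { intros t X Ht HX. set (Y := ip lst t).
    assert (HYi : interior lst Y) by (apply ip_interior; lra).
    assert (HYn : nzv Y) by (eapply interior_nzv; eauto).
    assert (HYS : on_S t1 t2 t3 t4 Y) by (eapply interior_onS; eauto).
    assert (Hp : ~ proj_eq (pt (last (lst :: rest) lst)) Y) by (eapply interior_notpt; eauto).
    destruct (main_inv t1 t2 t3 t4 rest lst Hnr_rw Y HYS Hp) as [W [Hc [HWS [_ [Hb _]]]]].
    assert (HW : proj_eq (pt lst) W) by (apply (Hb lst); [left; auto|apply interior_L; auto]).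
    apply graph_proj1 with W; [|eapply proj_eq_trans; [apply proj_eq_sym; eauto|auto]].
    apply Sym'. apply graphA_graph. apply graphA_of_cont; auto; [apply HWS|]. eapply approx_interior; eauto. }
  assert (Part3 : forall X : V4, nzv X ->
     (indet t1 t2 t3 t4 (i1 :: w) X <-> proj_eq (pt lst) X)).
  { intros X HX. split.
    - intros [[Y HY] Hinf]. apply NNPP; intros Hp.
      destruct (graph_onS t1 t2 t3 t4 _ _ _ HY) as [HXS _].
      destruct (main_inv t1 t2 t3 t4 w i1 Hw X HXS Hp) as [W [Hc [HWS _]]].
      refine (fiber_finite _ W _ Hinf). intros Y' HY'. eapply graph_single; eauto. apply HWS.
    - intros Hp. split.
      + exists (ip lst 1). apply Gint; auto; lra.
      + apply (infinite_ip lst). intros t Ht. apply Gint; auto. }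
  assert (Part1 : forall X : V4, nzv X ->
     (exc t1 t2 t3 t4 (i1 :: w) X <-> exists i, In i (i1 :: w) /\ on_L i X)).
  { intros X HX. split.
    - intros [Y [HXY Hinf]].
      assert (HYp : proj_eq (pt i1) Y).
      { apply NNPP; intros Hp.
        destruct (graph_onS t1 t2 t3 t4 _ _ _ HXY) as [_ HYS].
        rewrite <- Hlast_rw in Hp.
        destruct (main_inv t1 t2 t3 t4 rest lst Hnr_rw Y HYS Hp) as [W [Hc [HWS _]]].
        refine (fiber_finite _ W _ Hinf). intros X' HX'. eapply graph_single; eauto; [apply HWS|].
        apply Sym; auto. }
      apply NNPP; intros Hno.
      destruct (graph_onS t1 t2 t3 t4 _ _ _ HXY) as [HXS _].
      destruct (classic (proj_eq (pt lst) X)) as [HpX|HpX].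
      + destruct w as [|k w'].
        * apply (nograph t1 t2 t3 t4 i1).
          apply graph_proj2 with Y; [|apply proj_eq_sym; auto].
          apply graph_proj1 with X; auto. apply proj_eq_sym; auto.
        * destruct (exists_other i1 k w' Hw) as [j [Hj Hjl]].
          apply Hno. exists j. split; auto. apply (pt_on_L lst); auto.
      + destruct (main_inv t1 t2 t3 t4 w i1 Hw X HXS HpX) as [W [Hc [HWS [Ha [_ Hd]]]]].
        assert (HWY : proj_eq W Y) by (eapply graph_single; eauto; apply HWS).
        assert (HWp : proj_eq (pt i1) W) by (eapply proj_eq_trans; [apply HYp|apply proj_eq_sym; auto]).
        destruct (classic (X0 X = 0%C)) as [H0|H0].
        * destruct Hd as [k [_ [_ Hk]]]; auto.
          { intros i Hi HL. apply Hno; eauto. }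
          exact (interior_notpt k i1 W Hk HWp).
        * exact (affine_notpt i1 W (Ha H0) HWp).
    - intros [i [Hi HL]]. exists (pt i1). split; [eapply G; eauto|].
      apply (infinite_ip i1). intros t Ht. apply (G i1); [left; auto|].
      apply interior_L; [eapply interior_nzv|]; apply ip_interior; lra. }
  split; [exact Part1|split; [|exact Part3]].
  intros Y HY. split.
  - intros [X [Hexc [Hnind HXY]]].
    destruct (graph_nzv t1 t2 t3 t4 _ _ _ HXY) as [HX _].
    destruct (proj1 (Part1 X HX) Hexc) as [i [Hi HL]].
    pose proof (G i X Hi HL) as HG.
    assert (HpX : ~ proj_eq (pt lst) X) by (intros Hp; apply Hnind; apply Part3; auto).
    destruct (graph_onS t1 t2 t3 t4 _ _ _ HXY) as [HXS _].
    destruct (main_inv t1 t2 t3 t4 w i1 Hw X HXS HpX) as [W [Hc [HWS _]]].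
    assert (H1 : proj_eq W Y) by (eapply graph_single; eauto; apply HWS).
    assert (H2 : proj_eq W (pt i1)) by (eapply graph_single; eauto; apply HWS).
    eapply proj_eq_trans; [apply proj_eq_sym; eauto|auto].
  - intros Hp. set (X := ip i1 1).
    assert (HXi : interior i1 X) by (apply ip_interior; lra).
    assert (HXn : nzv X) by (eapply interior_nzv; eauto).
    assert (HXL : on_L i1 X) by (apply interior_L; auto).
    exists X. split; [|split].
    + apply Part1; auto. exists i1; split; [left|]; auto.
    + intros Hind. apply Part3 in Hind; auto. eapply interior_notpt; eauto.
    + apply graph_proj2 with (pt i1); auto. apply (G i1); [left|]; auto.
Qed.
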